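(* Let $\widetilde\omega:=\exp\bigl(2\int_0^1\ln K(x)\,dx\bigr)$. Then for every integer $n\ge1$ and every $x>0$, $$K(nx)=n^{\frac12nx(nx-1)+\frac1{12}}\;\widetilde\omega^{-\frac12(n^2-1)}\prod_{j=0}^{n-1}K\Bigl(x+\frac jn\Bigr)^n .$$
   Context: $K$ is the Kinkelin function: for $x>0$, $\ln K(x)=\int_0^x\ln\Gamma(t)\,dt+\frac{x(x-1)}{2}-\frac x2\ln 2\pi$; it satisfies $K(1)=1$, $K(x+1)=x^xK(x)$, and $\ln K$ extends continuously to $x=0$ with $K(0)=1$. *)

(* Defs.v *)
From Stdlib Require Import Reals.
From Coquelicot Require Import Coquelicot.
Open Scope R_scope.

Definition Gamma (t : R) : R :=
  RInt_gen (fun u => Rpower u (t - 1) * exp (- u)) (at_right 0) (Rbar_locally p_infty).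

Definition lnK (x : R) : R :=
  RInt_gen (fun t => ln (Gamma t)) (at_right 0) (at_point x)
  + x * (x - 1) / 2 - x / 2 * ln (2 * PI).

Definition K (x : R) : R := exp (lnK x).

Definition omega_t : R := exp (2 * RInt lnK 0 1).

Fixpoint prodR (n : nat) (f : nat -> R) : R :=
  match n with
  | O => 1
  | S k => prodR k f * f k
  end.

(* Main.v *)
Require Import Defs.
From Stdlib Require Import Reals Lra Lia Classical.
From Coquelicot Require Import Coquelicot.
Open Scope R_scope.


Lemma ball_R (x e y : R) : ball x e y <-> Rabs (y - x) < e.
Proof. reflexivity. Qed.

Ltac rball H := apply ball_R in H; simpl in H; apply Rabs_def2 in H; unfold minus, plus, opp in H; simpl in H.

Lemma mk_gen {Fa Fb : (R -> Prop) -> Prop} {FFa : Filter Fa} {FFb : Filter Fb}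
  (f : R -> R) (l : R) :
  filter_prod Fa Fb (fun ab => ex_RInt f (fst ab) (snd ab)) ->
  filterlim (fun ab => RInt f (fst ab) (snd ab)) (filter_prod Fa Fb) (locally l) ->
  is_RInt_gen f Fa Fb l.
Proof.
  intros Hex Hlim P HP. unfold filtermapi.
  specialize (Hlim P HP). unfold filtermap in Hlim.
  apply (filter_imp (fun ab => ex_RInt f (fst ab) (snd ab) /\ P (RInt f (fst ab) (snd ab)))).
  - intros ab [H1 H2]. exists (RInt f (fst ab) (snd ab)). split; [exact (RInt_correct _ _ _ H1) | exact H2].
  - apply filter_and; assumption.
Qed.

Lemma gen_lim {Fa Fb : (R -> Prop) -> Prop} {FFa : Filter Fa} {FFb : Filter Fb}
  (f : R -> R) (l : R) :
  is_RInt_gen f Fa Fb l ->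
  filterlim (fun ab => RInt f (fst ab) (snd ab)) (filter_prod Fa Fb) (locally l).
Proof.
  intros H P HP. specialize (H P HP). unfold filtermapi in H. unfold filtermap.
  revert H. apply filter_imp. intros ab [y [Hy Py]].
  rewrite (is_RInt_unique _ _ _ _ Hy). exact Py.
Qed.

Lemma gen_ex {Fa Fb : (R -> Prop) -> Prop} {FFa : Filter Fa} {FFb : Filter Fb}
  (f : R -> R) (l : R) :
  is_RInt_gen f Fa Fb l ->
  filter_prod Fa Fb (fun ab => ex_RInt f (fst ab) (snd ab)).
Proof.
  intros H. specialize (H (fun _ => True) (filter_true)). unfold filtermapi in H.
  revert H. apply filter_imp. intros ab [y [Hy _]]. exists y; exact Hy.
Qed.

Lemma mono_right0 (U : R -> R) (M : R) :
  (forall a a', 0 < a -> a <= a' -> a' <= 1 -> U a' <= U a) ->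
  (forall a, 0 < a <= 1 -> U a <= M) ->
  exists l, filterlim U (at_right 0) (locally l) /\ (forall a, 0 < a <= 1 -> U a <= l).
Proof.
  intros Hmono Hb.
  set (E := fun y => exists a, 0 < a <= 1 /\ y = U a).
  assert (HE : bound E). { exists M. intros y [a [Ha ->]]. apply Hb; exact Ha. }
  assert (HE2 : exists y, E y). { exists (U 1). exists 1. split; [lra|reflexivity]. }
  destruct (completeness E HE HE2) as [m [Hub Hlub]].
  exists m. split.
  - apply filterlim_locally. intros eps.
    destruct (classic (exists a0, 0 < a0 <= 1 /\ m - eps < U a0)) as [[a0 [Ha0 Hlt]]|Hn].
    + exists (mkposreal a0 (proj1 Ha0)). intros y Hy Hy0. apply ball_R.
      apply ball_R in Hy. simpl in Hy. apply Rabs_def2 in Hy. unfold minus, plus, opp in Hy; simpl in Hy.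
      assert (U y <= m) by (apply Hub; exists y; split; [split; lra|reflexivity]).
      assert (U a0 <= U y) by (apply Hmono; lra).
      apply Rabs_def1; lra.
    + exfalso. assert (Hup : is_upper_bound E (m - eps)).
      { intros y [a [Ha ->]]. destruct (Rle_or_lt (U a) (m - eps)) as [H|H]; [exact H|].
        exfalso; apply Hn; exists a; split; assumption. }
      specialize (Hlub _ Hup). destruct eps; simpl in *; lra.
  - intros a Ha. apply Hub. exists a. split; [exact Ha|reflexivity].
Qed.

Lemma mono_pinf (V : R -> R) (M : R) :
  (forall b b', 1 <= b -> b <= b' -> V b <= V b') ->
  (forall b, 1 <= b -> V b <= M) ->
  exists l, filterlim V (Rbar_locally p_infty) (locally l) /\ (forall b, 1 <= b -> V b <= l).
Proof.
  intros Hmono Hb.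
  set (E := fun y => exists b, 1 <= b /\ y = V b).
  assert (HE : bound E). { exists M. intros y [b [Hb' ->]]. apply Hb; exact Hb'. }
  assert (HE2 : exists y, E y). { exists (V 1). exists 1. split; [lra|reflexivity]. }
  destruct (completeness E HE HE2) as [m [Hub Hlub]].
  exists m. split.
  - apply filterlim_locally. intros eps.
    destruct (classic (exists b0, 1 <= b0 /\ m - eps < V b0)) as [[b0 [Hb0 Hlt]]|Hn].
    + exists b0. intros y Hy. apply ball_R.
      assert (V y <= m) by (apply Hub; exists y; split; [lra|reflexivity]).
      assert (V b0 <= V y) by (apply Hmono; lra).
      apply Rabs_def1; lra.
    + exfalso. assert (Hup : is_upper_bound E (m - eps)).
      { intros y [b [Hb' ->]]. destruct (Rle_or_lt (V b) (m - eps)) as [H|H]; [exact H|].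
        exfalso; apply Hn; exists b; split; assumption. }
      specialize (Hlub _ Hup). destruct eps; simpl in *; lra.
  - intros b Hb'. apply Hub. exists b. split; [exact Hb'|reflexivity].
Qed.

Lemma FTC_open (f F : R -> R) (a b d : R) :
  a <= b -> 0 < d ->
  (forall x, a - d < x < b + d -> continuous f x) ->
  continuous F a -> continuous F b ->
  (forall x, a < x < b -> is_derive F x (f x)) ->
  RInt f a b = F b - F a.
Proof.
  intros Hab Hd Hf HFa HFb HF.
  assert (Hex : forall u v, a - d < u < b + d -> a - d < v < b + d -> ex_RInt f u v).
  { intros u v Hu Hv. apply (ex_RInt_continuous (V:=R_CompleteNormedModule)). intros z Hz. apply Hf.
    split. apply Rlt_le_trans with (Rmin u v); [apply Rmin_glb_lt; lra|lra].
    apply Rle_lt_trans with (Rmax u v); [lra|apply Rmax_lub_lt; lra]. }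
  set (phi := fun s => RInt f a s - F s).
  assert (Hloc : forall x, a - d < x < b + d -> locally x (fun z => is_RInt f a z (RInt f a z))).
  { intros x Hx.
    assert (Hp : 0 < Rmin (x - (a - d)) (b + d - x)) by (apply Rmin_glb_lt; lra).
    exists (mkposreal _ Hp). intros z Hz. rball Hz.
    apply (RInt_correct (V:=R_CompleteNormedModule)). apply Hex. lra.
    assert (Rmin (x - (a - d)) (b + d - x) <= x - (a - d)) by apply Rmin_l.
    assert (Rmin (x - (a - d)) (b + d - x) <= b + d - x) by apply Rmin_r.
    lra. }
  destruct (MVT_gen phi a b (fun _ => 0)) as [c [_ Hc]].
  - intros x Hx. rewrite Rmin_left in Hx by lra. rewrite Rmax_right in Hx by lra.
    unfold phi. replace 0 with (f x - f x) by ring.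
    apply (is_derive_minus (fun s => RInt f a s) F).
    + apply (is_derive_RInt f (fun s => RInt f a s) a x). apply Hloc; lra. apply Hf; lra.
    + apply HF; exact Hx.
  - intros x Hx. rewrite Rmin_left in Hx by lra. rewrite Rmax_right in Hx by lra.
    apply continuity_pt_filterlim. unfold phi.
    apply (continuous_minus (fun s => RInt f a s) F x).
    + apply (continuous_RInt_1 f a x). apply Hloc; lra.
    + destruct (Req_dec x a) as [->|Hxa]. exact HFa.
      destruct (Req_dec x b) as [->|Hxb]. exact HFb.
      apply ex_derive_continuous. eexists. apply HF. lra.
  - unfold phi in Hc. rewrite RInt_point in Hc. rewrite Rmult_0_l in Hc.
    unfold zero in Hc; simpl in Hc. lra.
Qed.

Lemma exd_cont (f : R -> R) (x : R) : ex_derive f x -> continuous f x.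
Proof. intros H. apply (ex_derive_continuous (K:=R_AbsRing) (V:=R_NormedModule)). exact H. Qed.

Lemma exRInt_cont (f : R -> R) a b :
  (forall z, Rmin a b <= z <= Rmax a b -> continuous f z) -> ex_RInt f a b.
Proof. apply (ex_RInt_continuous (V:=R_CompleteNormedModule)). Qed.

Lemma exp_le_mono x y : x <= y -> exp x <= exp y.
Proof. intros [H|H]; [left; apply exp_increasing; exact H | right; rewrite H; reflexivity]. Qed.

Lemma at_right_pos (c : R) : at_right c (fun a => c < a).
Proof. exists (mkposreal 1 Rlt_0_1). intros y _ H. exact H. Qed.

Lemma at_right_lt (c d : R) : c < d -> at_right c (fun a => a < d).
Proof.
  intros H. exists (mkposreal (d - c) ltac:(lra)). intros y Hy _. rball Hy. simpl in Hy. lra.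
Qed.

Lemma pinf_gt (c : R) : Rbar_locally p_infty (fun b => c < b).
Proof. exists c. intros; assumption. Qed.

Lemma gen_split (f : R -> R) (lu lv : R) :
  (forall a b, 0 < a -> 0 < b -> ex_RInt f a b) ->
  filterlim (fun a => RInt f a 1) (at_right 0) (locally lu) ->
  filterlim (fun b => RInt f 1 b) (Rbar_locally p_infty) (locally lv) ->
  is_RInt_gen f (at_right 0) (Rbar_locally p_infty) (lu + lv).
Proof.
  intros Hex HU HV. apply mk_gen.
  - apply (Filter_prod _ _ _ (fun a => 0 < a) (fun b => 0 < b)).
    apply at_right_pos. apply pinf_gt. intros x y Hx Hy. simpl. apply Hex; assumption.
  - apply (filterlim_ext_loc (fun ab => plus (RInt f (fst ab) 1) (RInt f 1 (snd ab)))).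
    + apply (Filter_prod _ _ _ (fun a => 0 < a) (fun b => 0 < b)).
      apply at_right_pos. apply pinf_gt. intros x y Hx Hy. simpl.
      apply (RInt_Chasles (V:=R_CompleteNormedModule)); apply Hex; lra.
    + apply (filterlim_comp_2 (G:=locally lu) (H:=locally lv) (fun ab => RInt f (fst ab) 1) (fun ab => RInt f 1 (snd ab)) plus).
      * apply (filterlim_comp _ _ _ fst (fun a => RInt f a 1) _ (at_right 0)). apply filterlim_fst. exact HU.
      * apply (filterlim_comp _ _ _ snd (fun b => RInt f 1 b) _ (Rbar_locally p_infty)). apply filterlim_snd. exact HV.
      * apply (filterlim_plus (V:=R_NormedModule)).
Qed.

Section Lims.
Context {T : Type} {F : (T -> Prop) -> Prop} {FF : Filter F}.

Lemma lim_plus (f g : T -> R) lf lg :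
  filterlim f F (locally lf) -> filterlim g F (locally lg) ->
  filterlim (fun x => f x + g x) F (locally (lf + lg)).
Proof.
  intros Hf Hg.
  apply (filterlim_comp_2 (G:=locally lf) (H:=locally lg) f g plus Hf Hg).
  apply (filterlim_plus (V:=R_NormedModule)).
Qed.

Lemma lim_scal (f : T -> R) c lf :
  filterlim f F (locally lf) -> filterlim (fun x => c * f x) F (locally (c * lf)).
Proof.
  intros Hf. apply (filterlim_comp _ _ _ f (fun y => c * y) F (locally lf) (locally (c * lf)) Hf).
  apply (filterlim_scal_r (K:=R_AbsRing) (V:=R_NormedModule) c lf).
Qed.

Lemma lim_opp (f : T -> R) lf :
  filterlim f F (locally lf) -> filterlim (fun x => - f x) F (locally (- lf)).
Proof.
  intros Hf. apply (filterlim_ext (fun x => -1 * f x)). intros; ring.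
  replace (- lf) with (-1 * lf) by ring. apply lim_scal; exact Hf.
Qed.

Lemma lim_minus (f g : T -> R) lf lg :
  filterlim f F (locally lf) -> filterlim g F (locally lg) ->
  filterlim (fun x => f x - g x) F (locally (lf - lg)).
Proof. intros Hf Hg. apply lim_plus; [exact Hf | apply lim_opp; exact Hg]. Qed.

Lemma lim_const (c : R) : filterlim (fun _ => c) F (locally c).
Proof. apply filterlim_const. Qed.

End Lims.

Lemma lim_fst {Fa Fb : (R -> Prop) -> Prop} {FFb : Filter Fb} (A : R -> R) la :
  filterlim A Fa (locally la) -> filterlim (fun ab : R * R => A (fst ab)) (filter_prod Fa Fb) (locally la).
Proof. intros H. apply (filterlim_comp _ _ _ fst A _ Fa). apply filterlim_fst. exact H. Qed.

Lemma lim_snd {Fa Fb : (R -> Prop) -> Prop} {FFa : Filter Fa} (B : R -> R) lb :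
  filterlim B Fb (locally lb) -> filterlim (fun ab : R * R => B (snd ab)) (filter_prod Fa Fb) (locally lb).
Proof. intros H. apply (filterlim_comp _ _ _ snd B _ Fb). apply filterlim_snd. exact H. Qed.

Definition FP := filter_prod (at_right 0) (Rbar_locally p_infty).

Lemma FP_proper : ProperFilter FP.
Proof. unfold FP. apply filter_prod_proper; typeclasses eauto. Qed.

Lemma FP_pos : FP (fun ab => 0 < fst ab /\ 0 < snd ab).
Proof.
  apply (Filter_prod _ _ _ (fun a => 0 < a) (fun b => 0 < b)).
  apply at_right_pos. apply pinf_gt. intros; simpl; auto.
Qed.

Lemma lim_unique (f : R * R -> R) l1 l2 :
  filterlim f FP (locally l1) -> filterlim f FP (locally l2) -> l1 = l2.
Proof.
  intros H1 H2.
  exact (@filterlim_locally_unique _ R_AbsRing R_NormedModule FP (Proper_StrongProper _ FP_proper) f l1 l2 H1 H2).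
Qed.

Lemma lim_le (f g : R * R -> R) l1 l2 :
  FP (fun ab => f ab <= g ab) ->
  filterlim f FP (locally l1) -> filterlim g FP (locally l2) -> l1 <= l2.
Proof.
  intros Hle H1 H2.
  exact (@filterlim_le _ FP (Proper_StrongProper _ FP_proper) f g (Finite l1) (Finite l2) Hle H1 H2).
Qed.


Definition ft (t u : R) : R := Rpower u (t - 1) * exp (- u).

Lemma ft_exp t u : 0 < u -> ft t u = exp ((t - 1) * ln u - u).
Proof. intros Hu. unfold ft, Rpower. rewrite <- exp_plus. f_equal; ring. Qed.

Lemma ft_pos t u : 0 < ft t u.
Proof. unfold ft, Rpower. apply Rmult_lt_0_compat; apply exp_pos. Qed.

Lemma ft_cont t u : 0 < u -> continuous (ft t) u.
Proof.
  intros Hu. apply exd_cont. unfold ft, Rpower. auto_derive. lra.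
Qed.

Lemma ft_exRInt t a b : 0 < a -> 0 < b -> ex_RInt (ft t) a b.
Proof.
  intros Ha Hb. apply exRInt_cont.
  intros z Hz. apply ft_cont.
  apply Rlt_le_trans with (Rmin a b); [apply Rmin_glb_lt; lra | lra].
Qed.

Lemma ln_le_sub1 x : 0 < x -> ln x <= x - 1.
Proof. intros Hx. pose proof (exp_ineq1_le (ln x)). rewrite exp_ln in H by lra. lra. Qed.

Lemma lnbound s u : 1 <= u -> s * ln u <= u / 2 + Rabs s * ln (2 * Rabs s + 2).
Proof.
  intros Hu. set (m := 2 * Rabs s + 2).
  assert (Hs : 0 <= Rabs s) by apply Rabs_pos.
  assert (Hm : 0 < m) by (unfold m; lra).
  assert (Hl : 0 <= ln u) by (rewrite <- ln_1; apply ln_le; lra).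
  assert (H1 : ln u <= u / m + ln m).
  { pose proof (ln_le_sub1 (u / m)). assert (0 < u / m) by (apply Rdiv_lt_0_compat; lra).
    specialize (H H0). unfold Rdiv in H. rewrite ln_mult in H by (try apply Rinv_0_lt_compat; lra).
    rewrite ln_Rinv in H by lra. fold (u / m) in H. lra. }
  assert (H2 : s * ln u <= Rabs s * ln u).
  { apply Rmult_le_compat_r; [exact Hl | apply Rle_abs]. }
  assert (H3 : Rabs s * ln u <= Rabs s * (u / m + ln m)) by (apply Rmult_le_compat_l; lra).
  assert (H4 : Rabs s * (u / m) <= u / 2).
  { assert (Hq: Rabs s / m <= 1/2).
    { unfold Rdiv. apply Rmult_le_reg_r with m; [lra|]. rewrite Rmult_assoc, Rinv_l by lra. unfold m; lra. }
    replace (Rabs s * (u / m)) with (u * (Rabs s / m)) by (field; lra).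
    apply Rle_trans with (u * (1/2)); [apply Rmult_le_compat_l; lra | lra]. }
  lra.
Qed.

Lemma ft_bound t u : 1 <= u ->
  ft t u <= exp (Rabs (t - 1) * ln (2 * Rabs (t - 1) + 2)) * exp (- (u / 2)).
Proof.
  intros Hu. rewrite ft_exp by lra. rewrite <- exp_plus. apply exp_le_mono.
  pose proof (lnbound (t - 1) u Hu). lra.
Qed.

Lemma rpow_div t x : 0 < x -> exp (t * ln x) / x = Rpower x (t - 1).
Proof.
  intros Hx. unfold Rpower. replace ((t - 1) * ln x) with (t * ln x + - ln x) by ring.
  rewrite exp_plus, exp_Ropp, exp_ln by lra. reflexivity.
Qed.
Lemma rpow_int t a b : 0 < t -> 0 < a -> 0 < b ->
  RInt (fun u => Rpower u (t - 1)) a b = (exp (t * ln b) - exp (t * ln a)) / t.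
Proof.
  intros Ht Ha Hb.
  apply is_RInt_unique.
  replace ((exp (t * ln b) - exp (t * ln a)) / t) with (minus (exp (t * ln b) / t) (exp (t * ln a) / t))
    by (unfold minus, plus, opp; simpl; field; lra).
  apply (is_RInt_derive (fun u => exp (t * ln u) / t)).
  - intros x Hx. assert (0 < x) by (apply Rlt_le_trans with (Rmin a b); [apply Rmin_glb_lt|]; lra).
    auto_derive. lra. rewrite <- rpow_div by lra. field. lra.
  - intros x Hx. assert (0 < x) by (apply Rlt_le_trans with (Rmin a b); [apply Rmin_glb_lt|]; lra).
    apply exd_cont. unfold Rpower. auto_derive. lra.
Qed.

Lemma mnpos a b : 0 < a -> 0 < b -> forall x, Rmin a b <= x <= Rmax a b -> 0 < x.
Proof. intros Ha Hb x Hx. apply Rlt_le_trans with (Rmin a b); [apply Rmin_glb_lt|]; lra. Qed.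

Lemma exp_neg_le1 u : 0 <= u -> exp (- u) <= 1.
Proof. intros H. rewrite <- exp_0. apply exp_le_mono. lra. Qed.

Lemma U_bound t a : 0 < t -> 0 < a <= 1 -> RInt (ft t) a 1 <= 1 / t.
Proof.
  intros Ht Ha.
  apply Rle_trans with (RInt (fun u => Rpower u (t - 1)) a 1).
  - apply RInt_le. lra. apply ft_exRInt; lra.
    apply exRInt_cont. intros z Hz. apply exd_cont. pose proof (mnpos a 1 ltac:(lra) ltac:(lra) z Hz).
    unfold Rpower. auto_derive. lra.
    intros x Hx. unfold ft. rewrite <- (Rmult_1_r (Rpower x (t - 1))) at 2.
    apply Rmult_le_compat_l. unfold Rpower; left; apply exp_pos. apply exp_neg_le1; lra.
  - rewrite rpow_int by lra. rewrite ln_1, Rmult_0_r, exp_0.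
    unfold Rdiv. apply Rmult_le_compat_r. left; apply Rinv_0_lt_compat; lra.
    pose proof (exp_pos (t * ln a)). lra.
Qed.

Definition Cb (t : R) := exp (Rabs (t - 1) * ln (2 * Rabs (t - 1) + 2)).

Lemma V_bound t b : 1 <= b -> RInt (ft t) 1 b <= 2 * Cb t.
Proof.
  intros Hb.
  assert (HC : 0 < Cb t) by apply exp_pos.
  apply Rle_trans with (RInt (fun u => Cb t * exp (- (u / 2))) 1 b).
  - apply RInt_le. lra. apply ft_exRInt; lra.
    apply exRInt_cont. intros z Hz. apply exd_cont. auto_derive. auto.
    intros x Hx. apply ft_bound. lra.
  - rewrite (is_RInt_unique _ _ _ (minus (-2 * Cb t * exp (- (b / 2))) (-2 * Cb t * exp (- (1 / 2))))).
    + unfold minus, plus, opp; simpl. pose proof (exp_pos (- (b / 2))). pose proof (exp_pos (- (1/2))).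
      pose proof (exp_neg_le1 (1/2) ltac:(lra)). nra.
    + apply (is_RInt_derive (fun u => -2 * Cb t * exp (- (u / 2)))).
      * intros x _. auto_derive. auto. unfold Rdiv. lra.
      * intros x _. apply exd_cont. auto_derive. auto.
Qed.

Lemma Gamma_is t : 0 < t ->
  exists l, is_RInt_gen (ft t) (at_right 0) (Rbar_locally p_infty) l /\ 0 < l.
Proof.
  intros Ht.
  destruct (mono_right0 (fun a => RInt (ft t) a 1) (1 / t)) as [lu [HU HUb]].
  { intros a a' Ha Haa' Ha'.
    rewrite <- (RInt_Chasles (V:=R_CompleteNormedModule) (ft t) a a' 1) by (apply ft_exRInt; lra).
    simpl. assert (0 <= RInt (ft t) a a'). { apply RInt_ge_0. lra. apply ft_exRInt; lra. intros; left; apply ft_pos. }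
    unfold plus; simpl. lra. }
  { intros a Ha. apply U_bound; lra. }
  destruct (mono_pinf (fun b => RInt (ft t) 1 b) (2 * Cb t)) as [lv [HV HVb]].
  { intros b b' Hb Hbb'.
    rewrite <- (RInt_Chasles (V:=R_CompleteNormedModule) (ft t) 1 b b') by (apply ft_exRInt; lra).
    simpl. assert (0 <= RInt (ft t) b b'). { apply RInt_ge_0. lra. apply ft_exRInt; lra. intros; left; apply ft_pos. }
    unfold plus; simpl. lra. }
  { intros b Hb. apply V_bound; lra. }
  exists (lu + lv). split.
  - apply gen_split; auto. intros; apply ft_exRInt; auto.
  - assert (H1 : RInt (ft t) 1 1 <= lu) by (apply HUb; lra).
    rewrite RInt_point in H1. 
    assert (H2 : RInt (ft t) 1 2 <= lv) by (apply HVb; lra).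
    assert (H3 : 0 < RInt (ft t) 1 2).
    { apply RInt_gt_0. lra. intros; apply ft_pos. intros x Hx; apply ft_cont; lra. }
    unfold zero in H1; simpl in H1. lra.
Qed.

Lemma Gamma_eq t : Gamma t = RInt_gen (ft t) (at_right 0) (Rbar_locally p_infty).
Proof. reflexivity. Qed.

Lemma Gamma_gen t : 0 < t -> is_RInt_gen (ft t) (at_right 0) (Rbar_locally p_infty) (Gamma t).
Proof.
  intros Ht. destruct (Gamma_is t Ht) as [l [Hl _]].
  rewrite Gamma_eq. rewrite (is_RInt_gen_unique _ _ Hl). exact Hl.
Qed.

Lemma Gamma_pos t : 0 < t -> 0 < Gamma t.
Proof.
  intros Ht. destruct (Gamma_is t Ht) as [l [Hl Hp]].
  rewrite Gamma_eq. rewrite (is_RInt_gen_unique _ _ Hl). exact Hp.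
Qed.

Lemma pow_at0 t : 0 < t -> filterlim (fun a => exp (t * ln a) * exp (- a)) (at_right 0) (locally 0).
Proof.
  intros Ht. apply filterlim_locally. intros eps.
  assert (Hd : 0 < exp (ln eps / t)) by apply exp_pos.
  exists (mkposreal _ Hd). intros y Hy Hy0. rball Hy. simpl in Hy. apply ball_R.
  assert (H1 : ln y < ln eps / t).
  { rewrite <- (ln_exp (ln eps / t)). apply ln_increasing; lra. }
  assert (H2 : t * ln y < ln eps).
  { apply Rmult_lt_compat_l with (r := t) in H1; [|exact Ht]. field_simplify in H1; lra. }
  assert (H3 : exp (t * ln y) < eps).
  { rewrite <- (exp_ln eps) by (destruct eps; simpl; lra). apply exp_increasing; exact H2. }
  pose proof (exp_pos (t * ln y)). pose proof (exp_pos (- y)). pose proof (exp_neg_le1 y ltac:(lra)).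
  rewrite Rminus_0_r. rewrite Rabs_pos_eq by nra. nra.
Qed.

Lemma pow_exp_inf t : filterlim (fun b => exp (t * ln b) * exp (- b)) (Rbar_locally p_infty) (locally 0).
Proof.
  apply filterlim_locally. intros eps.
  set (C0 := Rabs t * ln (2 * Rabs t + 2)).
  exists (Rmax 1 (2 * (C0 - ln eps))). intros b Hb. apply ball_R.
  assert (Hb1 : 1 < b) by (eapply Rle_lt_trans; [apply Rmax_l|exact Hb]).
  assert (Hb2 : 2 * (C0 - ln eps) < b) by (eapply Rle_lt_trans; [apply Rmax_r|exact Hb]).
  pose proof (lnbound t b ltac:(lra)) as Hl. fold C0 in Hl.
  rewrite <- exp_plus. rewrite Rminus_0_r. rewrite Rabs_pos_eq by (left; apply exp_pos).
  rewrite <- (exp_ln eps) by (destruct eps; simpl; lra). apply exp_increasing. lra.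
Qed.

Lemma Gamma_succ t : 0 < t -> Gamma (t + 1) = t * Gamma t.
Proof.
  intros Ht.
  set (h := fun u => - (exp (t * ln u) * exp (- u))).
  assert (Hint : forall a b, 0 < a -> 0 < b -> RInt (ft (t + 1)) a b = h b - h a + t * RInt (ft t) a b).
  { intros a b Ha Hb.
    assert (H1 : is_RInt (fun u => minus (ft (t + 1) u) (scal t (ft t u))) a b (minus (h b) (h a))).
    { apply (is_RInt_derive h).
      - intros x Hx. pose proof (mnpos a b Ha Hb x Hx). unfold h. auto_derive. lra.
        unfold ft. rewrite <- (rpow_div t x) by lra. replace (t + 1 - 1) with t by ring.
        unfold minus, plus, opp, scal; simpl. unfold mult; simpl. unfold Rpower. field. lra.
      - intros x Hx. pose proof (mnpos a b Ha Hb x Hx). apply exd_cont. unfold ft, Rpower, minus, plus, opp, scal; simpl. unfold mult; simpl.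
        auto_derive. lra. }
    apply (is_RInt_unique (V:=R_CompleteNormedModule)) in H1.
    rewrite (RInt_minus (V:=R_CompleteNormedModule)) in H1.
    rewrite (RInt_scal (V:=R_CompleteNormedModule)) in H1.
    unfold minus, plus, opp, scal in H1; simpl in H1; unfold mult in H1; simpl in H1. lra.
    apply ft_exRInt; auto.
    apply ft_exRInt; auto.
    apply (ex_RInt_scal (V:=R_NormedModule)). apply ft_exRInt; auto. }
  pose proof (gen_lim (Fa:=at_right 0) (Fb:=Rbar_locally p_infty) _ _ (Gamma_gen (t + 1) ltac:(lra))) as L1.
  assert (L2 : filterlim (fun ab => h (snd ab) - h (fst ab) + t * RInt (ft t) (fst ab) (snd ab)) FP
                 (locally (- 0 - - 0 + t * Gamma t))).
  { apply lim_plus. apply lim_minus.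
    - apply (lim_snd (fun b => h b)). unfold h. apply lim_opp. apply pow_exp_inf.
    - apply (lim_fst (fun a => h a)). unfold h. apply lim_opp. apply pow_at0; exact Ht.
    - apply lim_scal. apply (gen_lim (Fa:=at_right 0) (Fb:=Rbar_locally p_infty)). apply Gamma_gen; exact Ht. }
  replace (- 0 - - 0 + t * Gamma t) with (t * Gamma t) in L2 by ring.
  apply (lim_unique (fun ab => RInt (ft (t + 1)) (fst ab) (snd ab))). exact L1.
  eapply filterlim_ext_loc; [|exact L2].
  generalize FP_pos. apply filter_imp. intros [a b] [Ha Hb]. simpl in *. rewrite Hint by auto. reflexivity.
Qed.


Lemma cont_at_right (f : R -> R) c : continuous f c -> filterlim f (at_right c) (locally (f c)).
Proof.
  intros Hc P HP. specialize (Hc P HP). destruct Hc as [e He]. exists e. intros y Hy _. apply He. exact Hy.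
Qed.

Lemma Gamma_one : Gamma 1 = 1.
Proof.
  assert (Hint : forall a b, 0 < a -> 0 < b -> RInt (ft 1) a b = exp (- a) - exp (- b)).
  { intros a b Ha Hb. apply (is_RInt_unique (V:=R_CompleteNormedModule)).
    replace (exp (- a) - exp (- b)) with (minus (- exp (- b)) (- exp (- a)))
      by (unfold minus, plus, opp; simpl; ring).
    apply (is_RInt_derive (fun u => - exp (- u))).
    - intros x Hx. auto_derive. auto. unfold ft, Rpower. replace (1 - 1) with 0 by ring.
      rewrite Rmult_0_l, exp_0. ring.
    - intros x Hx. pose proof (mnpos a b Ha Hb x Hx). apply ft_cont; lra. }
  pose proof (gen_lim (Fa:=at_right 0) (Fb:=Rbar_locally p_infty) _ _ (Gamma_gen 1 ltac:(lra))) as L1.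
  assert (L2 : filterlim (fun ab => exp (- fst ab) - exp (- snd ab)) FP (locally (1 - 0))).
  { apply lim_minus.
    - apply (lim_fst (fun a => exp (- a))). rewrite <- exp_0. replace 0 with (- 0) at 2 by ring.
      apply (cont_at_right (fun a => exp (- a))). apply exd_cont. auto_derive. auto.
    - apply (lim_snd (fun b => exp (- b))). eapply filterlim_ext; [|apply (pow_exp_inf 0)].
      intros x. simpl. rewrite Rmult_0_l, exp_0. ring. }
  replace (1 - 0) with 1 in L2 by ring.
  apply (lim_unique (fun ab => RInt (ft 1) (fst ab) (snd ab))). exact L1.
  eapply filterlim_ext_loc; [|exact L2].
  generalize FP_pos. apply filter_imp. intros [a b] [Ha Hb]. simpl in *. rewrite Hint by auto. reflexivity.
Qed.

Lemma exp_convex l X Y : 0 <= l <= 1 -> exp (l * X + (1 - l) * Y) <= l * exp X + (1 - l) * exp Y.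
Proof.
  intros Hl. set (w := l * exp X + (1 - l) * exp Y).
  pose proof (exp_pos X). pose proof (exp_pos Y).
  assert (Hw : 0 < w).
  { unfold w. destruct (Rle_lt_dec l 0). assert (l = 0) by lra. subst l. lra. nra. }
  assert (E1 : exp X = w * exp (X - ln w)).
  { unfold Rminus. rewrite exp_plus, exp_Ropp, exp_ln by lra. field. lra. }
  assert (E2 : exp Y = w * exp (Y - ln w)).
  { unfold Rminus. rewrite exp_plus, exp_Ropp, exp_ln by lra. field. lra. }
  pose proof (exp_ineq1_le (X - ln w)) as H1. pose proof (exp_ineq1_le (Y - ln w)) as H2.
  assert (H3 : l * w * (1 + (X - ln w)) <= l * w * exp (X - ln w)) by (apply Rmult_le_compat_l; nra).
  assert (H4 : (1 - l) * w * (1 + (Y - ln w)) <= (1 - l) * w * exp (Y - ln w)) by (apply Rmult_le_compat_l; nra).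
  assert (H5 : w = l * w * exp (X - ln w) + (1 - l) * w * exp (Y - ln w)).
  { unfold w at 1. rewrite E1, E2. ring. }
  assert (H6 : w * (l * X + (1 - l) * Y - ln w) <= 0) by nra.
  assert (H7 : l * X + (1 - l) * Y <= ln w).
  { destruct (Rle_lt_dec (l * X + (1 - l) * Y) (ln w)); auto. nra. }
  rewrite <- (exp_ln w) by lra. fold w. apply exp_le_mono. exact H7.
Qed.

Lemma FP_ord : FP (fun ab => 0 < fst ab /\ fst ab < 1 /\ 1 < snd ab).
Proof.
  apply (Filter_prod _ _ _ (fun a => 0 < a /\ a < 1) (fun b => 1 < b)).
  apply filter_and. apply at_right_pos. apply at_right_lt; lra. apply pinf_gt. intros; simpl; tauto.
Qed.

Lemma Gamma_logconv x y l : 0 < x -> 0 < y -> 0 <= l <= 1 ->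
  ln (Gamma (l * x + (1 - l) * y)) <= l * ln (Gamma x) + (1 - l) * ln (Gamma y).
Proof.
  intros Hx Hy Hl.
  set (z := l * x + (1 - l) * y).
  assert (Hz : 0 < z). { unfold z. destruct (Rle_lt_dec l 0). assert (l = 0) by lra. subst l. lra. nra. }
  set (A := Gamma x). set (B := Gamma y).
  assert (HA : 0 < A) by (apply Gamma_pos; lra). assert (HB : 0 < B) by (apply Gamma_pos; lra).
  set (Kc := exp (l * ln A + (1 - l) * ln B)).
  set (comb := fun u => plus (scal (Kc * l / A) (ft x u)) (scal (Kc * (1 - l) / B) (ft y u))).
  assert (Hpt : forall u, 0 < u -> ft z u <= comb u).
  { intros u Hu. unfold comb, plus, scal; simpl; unfold mult; simpl.
    rewrite (ft_exp z u Hu), (ft_exp x u Hu), (ft_exp y u Hu).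
    set (X := (x - 1) * ln u - u - ln A). set (Y := (y - 1) * ln u - u - ln B).
    assert (EZ : (z - 1) * ln u - u = (l * X + (1 - l) * Y) + (l * ln A + (1 - l) * ln B)).
    { unfold X, Y, z. ring. }
    assert (EX : exp ((x - 1) * ln u - u) = A * exp X).
    { unfold X. replace ((x - 1) * ln u - u - ln A) with (((x - 1) * ln u - u) + - ln A) by ring. rewrite exp_plus, exp_Ropp, exp_ln by lra. field. lra. }
    assert (EY : exp ((y - 1) * ln u - u) = B * exp Y).
    { unfold Y. replace ((y - 1) * ln u - u - ln B) with (((y - 1) * ln u - u) + - ln B) by ring. rewrite exp_plus, exp_Ropp, exp_ln by lra. field. lra. }
    rewrite EZ, exp_plus, EX, EY. fold Kc.
    replace (Kc * l / A * (A * exp X) + Kc * (1 - l) / B * (B * exp Y))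
      with (Kc * (l * exp X + (1 - l) * exp Y)) by (field; lra).
    rewrite Rmult_comm. apply Rmult_le_compat_l. left; apply exp_pos. apply exp_convex; exact Hl. }
  assert (Hcomb : is_RInt_gen comb (at_right 0) (Rbar_locally p_infty)
                    (plus (scal (Kc * l / A) A) (scal (Kc * (1 - l) / B) B))).
  { apply (is_RInt_gen_plus (V:=R_NormedModule)); apply (is_RInt_gen_scal (V:=R_NormedModule)); apply Gamma_gen; lra. }
  replace (plus (scal (Kc * l / A) A) (scal (Kc * (1 - l) / B) B)) with Kc in Hcomb
    by (unfold plus, scal; simpl; unfold mult; simpl; field; lra).
  assert (Hle : Gamma z <= Kc).
  { apply (lim_le (fun ab => RInt (ft z) (fst ab) (snd ab)) (fun ab => RInt comb (fst ab) (snd ab))).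
    - generalize FP_ord. apply filter_imp. intros [a b] [Ha [Ha1 Hb1]]. simpl in *.
      apply RInt_le. lra. apply ft_exRInt; lra.
      apply exRInt_cont. intros w Hw. pose proof (mnpos a b Ha ltac:(lra) w Hw).
      unfold comb. apply (continuous_plus (V:=R_NormedModule)); apply (continuous_scal_r (V:=R_NormedModule)); apply ft_cont; lra.
      intros w Hw. apply Hpt. lra.
    - apply (gen_lim (Fa:=at_right 0) (Fb:=Rbar_locally p_infty)). apply Gamma_gen; exact Hz.
    - apply (gen_lim (Fa:=at_right 0) (Fb:=Rbar_locally p_infty)). exact Hcomb. }
  apply ln_le in Hle; [|apply Gamma_pos; exact Hz]. unfold Kc in Hle. rewrite ln_exp in Hle. exact Hle.
Qed.


Lemma c2d_comp (f : R -> R -> R) (g : R -> R) x y :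
  continuity_2d_pt f x y -> continuous g (f x y) -> continuity_2d_pt (fun u v => g (f u v)) x y.
Proof.
  intros Hf Hg. apply continuity_2d_pt_filterlim. apply continuity_2d_pt_filterlim in Hf.
  eapply filterlim_comp; [exact Hf | exact Hg].
Qed.

Definition gf (t : R) : R := exp (- (t * t)).
Definition Hp (x t : R) : R := exp (- (x * x * (1 + t * t))) / (1 + t * t).
Definition dHp (x t : R) : R := -2 * x * exp (- (x * x * (1 + t * t))).
Definition Eg (x : R) : R := RInt gf 0 x.
Definition Hg (x : R) : R := RInt (Hp x) 0 1.

Lemma pos1 t : 0 < 1 + t * t.
Proof. nra. Qed.

Lemma gf_cont t : continuous gf t.
Proof. apply exd_cont. unfold gf. auto_derive. auto. Qed.

Lemma Hp_deriv x t : is_derive (fun u => Hp u t) x (dHp x t).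
Proof.
  pose proof (pos1 t). unfold Hp, dHp. auto_derive. lra. field. lra.
Qed.

Lemma Hp_cont x t : continuous (Hp x) t.
Proof. pose proof (pos1 t). apply exd_cont. unfold Hp. auto_derive. lra. Qed.

Lemma dHp_c2d x t : continuity_2d_pt dHp x t.
Proof.
  unfold dHp.
  apply (continuity_2d_pt_mult (fun u v => -2 * u) (fun u v => exp (- (u * u * (1 + v * v))))).
  - apply (continuity_2d_pt_mult (fun u v => -2) (fun u v => u)).
    apply continuity_2d_pt_const. apply continuity_2d_pt_id1.
  - apply (c2d_comp (fun u v => - (u * u * (1 + v * v))) exp).
    + apply continuity_2d_pt_opp.
      apply (continuity_2d_pt_mult (fun u v => u * u) (fun u v => 1 + v * v)).
      apply (continuity_2d_pt_mult (fun u v => u) (fun u v => u)); apply continuity_2d_pt_id1.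
      apply (continuity_2d_pt_plus (fun u v => 1) (fun u v => v * v)). apply continuity_2d_pt_const.
      apply (continuity_2d_pt_mult (fun u v => v) (fun u v => v)); apply continuity_2d_pt_id2.
    + apply exd_cont. auto_derive. auto.
Qed.

Lemma Hg_deriv x : is_derive Hg x (RInt (dHp x) 0 1).
Proof.
  unfold Hg.
  assert (E : RInt (dHp x) 0 1 = RInt (fun t => Derive (fun u => Hp u t) x) 0 1).
  { apply RInt_ext. intros t _. symmetry. apply is_derive_unique. apply Hp_deriv. }
  rewrite E. apply (is_derive_RInt_param Hp 0 1 x).
  - apply filter_forall. intros y t _. eexists. apply Hp_deriv.
  - intros t _. apply (continuity_2d_pt_ext dHp). intros u v. symmetry. apply is_derive_unique. apply Hp_deriv.
    apply dHp_c2d.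
  - apply filter_forall. intros y. apply exRInt_cont. intros z _. apply Hp_cont.
Qed.

Lemma dHp_int x : RInt (dHp x) 0 1 = -2 * gf x * Eg x.
Proof.
  assert (E1 : forall t, dHp x t = (-2 * gf x) * scal x (gf (x * t + 0))).
  { intros t. unfold dHp, gf, scal; simpl; unfold mult; simpl.
    replace (x * t + 0) with (x * t) by ring.
    replace (exp (- (x * x * (1 + t * t)))) with (exp (- (x * x)) * exp (- (x * t * (x * t))))
      by (rewrite <- exp_plus; f_equal; ring). ring. }
  rewrite (RInt_ext _ (fun t => scal (-2 * gf x) (scal x (gf (x * t + 0))))) by (intros; apply E1).
  rewrite (RInt_scal (V:=R_CompleteNormedModule)).
  rewrite (RInt_comp_lin (V:=R_CompleteNormedModule)).
  replace (x * 0 + 0) with 0 by ring. replace (x * 1 + 0) with x by ring.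
  unfold scal; simpl; unfold mult; simpl. reflexivity.
  apply exRInt_cont. intros; apply gf_cont.
  apply (ex_RInt_comp_lin (V:=R_NormedModule)). apply exRInt_cont. intros; apply gf_cont.
Qed.

Lemma Eg_loc x : locally x (fun b => is_RInt gf 0 b (Eg b)).
Proof.
  apply filter_forall. intros b. unfold Eg. apply (RInt_correct (V:=R_CompleteNormedModule)).
  apply exRInt_cont. intros; apply gf_cont.
Qed.

Lemma Eg_deriv x : is_derive Eg x (gf x).
Proof. apply (is_derive_RInt gf Eg 0 x). apply Eg_loc. apply gf_cont. Qed.

Lemma Eg_cont x : continuous Eg x.
Proof. apply (continuous_RInt_1 gf 0 x). apply Eg_loc. Qed.

Definition hh x := Eg x * Eg x + Hg x.

Lemma hh_deriv x : is_derive hh x 0.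
Proof.
  unfold hh.
  replace 0 with (plus (plus (mult (gf x) (Eg x)) (mult (Eg x) (gf x))) (RInt (dHp x) 0 1)).
  apply (is_derive_plus (fun y => mult (Eg y) (Eg y)) Hg).
  apply (is_derive_mult Eg Eg). apply Eg_deriv. apply Eg_deriv. intros; apply Rmult_comm.
  apply Hg_deriv.
  rewrite dHp_int. unfold plus, mult; simpl. ring.
Qed.

Lemma hh_const x : hh x = hh 0.
Proof.
  pose proof (is_RInt_derive (V:=R_CompleteNormedModule) hh (fun _ => 0) 0 x) as H.
  assert (H1 : is_RInt (fun _ : R => 0) 0 x (minus (hh x) (hh 0))).
  { apply H. intros; apply hh_deriv. intros; apply continuous_const. }
  pose proof (is_RInt_const (V:=R_NormedModule) 0 x 0) as H2.
  apply (is_RInt_unique (V:=R_CompleteNormedModule)) in H1.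
  apply (is_RInt_unique (V:=R_CompleteNormedModule)) in H2.
  rewrite H1 in H2. unfold minus, plus, opp, scal in H2; simpl in H2; unfold mult in H2; simpl in H2. lra.
Qed.

Lemma hh_0 : hh 0 = PI / 4.
Proof.
  unfold hh, Eg, Hg. rewrite RInt_point. unfold zero; simpl.
  rewrite (RInt_ext _ (fun t => / (1 + t²))).
  2:{ intros t _. unfold Hp, Rsqr. replace (- (0 * 0 * (1 + t * t))) with 0 by ring. rewrite exp_0. unfold Rdiv; rewrite Rmult_1_l; reflexivity.
      }
  rewrite (is_RInt_unique (V:=R_CompleteNormedModule) _ _ _ (minus (atan 1) (atan 0))).
  rewrite atan_1, atan_0. unfold minus, plus, opp; simpl. ring.
  apply (is_RInt_derive atan). intros; apply is_derive_atan.
  intros t _. apply exd_cont. auto_derive. unfold Rsqr. pose proof (pos1 t). lra.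
Qed.

Lemma Hg_bound x : 0 <= Hg x <= exp (- (x * x)).
Proof.
  unfold Hg. split.
  - apply RInt_ge_0. lra. apply exRInt_cont; intros; apply Hp_cont.
    intros t _. unfold Hp. pose proof (pos1 t). left. apply Rdiv_lt_0_compat. apply exp_pos. lra.
  - replace (exp (- (x * x))) with (RInt (fun _ => exp (- (x * x))) 0 1).
    apply RInt_le. lra. apply exRInt_cont; intros; apply Hp_cont. apply exRInt_cont; intros; apply continuous_const.
    intros t Ht. unfold Hp. pose proof (pos1 t).
    replace (exp (- (x * x * (1 + t * t)))) with (exp (- (x * x)) * exp (- (x * x * (t * t))))
      by (rewrite <- exp_plus; f_equal; ring).
    pose proof (exp_pos (- (x * x))). pose proof (exp_pos (- (x * x * (t * t)))).
    pose proof (exp_neg_le1 (x * x * (t * t)) ltac:(nra)).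
    unfold Rdiv. apply Rle_trans with (exp (- (x * x)) * exp (- (x * x * (t * t)))).
    rewrite <- (Rmult_1_r (exp (- (x * x)) * exp (- (x * x * (t * t))))) at 2.
    apply Rmult_le_compat_l. nra. rewrite <- Rinv_1. apply Rinv_le_contravar; [lra|nra]. nra.
    rewrite RInt_const. unfold scal; simpl; unfold mult; simpl. ring.
Qed.

Lemma Hg_lim : filterlim Hg (Rbar_locally p_infty) (locally 0).
Proof.
  apply filterlim_locally. intros eps.
  pose proof (pow_exp_inf 0) as L. apply filterlim_locally with (eps := eps) in L.
  apply (filter_imp (fun b => 1 < b /\ ball 0 eps (exp (0 * ln b) * exp (- b)))).
  2:{ apply filter_and. apply pinf_gt. exact L. }
  intros b [Hb Hball]. rball Hball. apply ball_R.
  rewrite Rmult_0_l, exp_0, Rmult_1_l in Hball.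
  pose proof (Hg_bound b). assert (exp (- (b * b)) <= exp (- b)) by (apply exp_le_mono; nra).
  rewrite Rminus_0_r, Rabs_pos_eq by lra. lra.
Qed.

Lemma Eg_nonneg x : 0 <= x -> 0 <= Eg x.
Proof.
  intros Hx. unfold Eg. apply RInt_ge_0. exact Hx. apply exRInt_cont; intros; apply gf_cont.
  intros; left; apply exp_pos.
Qed.

Lemma Eg_lim : filterlim Eg (Rbar_locally p_infty) (locally (sqrt PI / 2)).
Proof.
  assert (Hsq : forall x, 0 <= x -> Eg x = sqrt (PI / 4 - Hg x)).
  { intros x Hx. rewrite <- hh_0, <- (hh_const x). unfold hh.
    replace (Eg x * Eg x + Hg x - Hg x) with (Eg x * Eg x) by ring.
    rewrite sqrt_square; auto. apply Eg_nonneg; exact Hx. }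
  apply (filterlim_ext_loc (fun x => sqrt (PI / 4 - Hg x))).
  { apply (filter_imp (fun x => 0 < x)). intros x Hx. symmetry; apply Hsq; lra. apply pinf_gt. }
  replace (sqrt PI / 2) with (sqrt (PI / 4 - 0)).
  apply (filterlim_comp _ _ _ (fun x => PI / 4 - Hg x) sqrt _ (locally (PI / 4 - 0))).
  apply lim_minus. apply lim_const. apply Hg_lim.
  apply exd_cont. auto_derive. pose proof PI_RGT_0. lra.
  replace (PI / 4 - 0) with (PI / (2 * 2)) by field. rewrite sqrt_div_alt by lra.
  rewrite sqrt_square by lra. reflexivity.
Qed.

Lemma ft_half_int a b : 0 < a -> 0 < b -> RInt (ft (1/2)) a b = 2 * (Eg (sqrt b) - Eg (sqrt a)).
Proof.
  intros Ha Hb.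
  assert (Hsa : 0 < sqrt a) by (apply sqrt_lt_R0; lra).
  assert (Hsb : 0 < sqrt b) by (apply sqrt_lt_R0; lra).
  pose proof (RInt_comp (V:=R_CompleteNormedModule) (ft (1/2)) (fun s => s * s) (fun s => 2 * s) (sqrt a) (sqrt b)) as H.
  cbv beta in H. rewrite !sqrt_sqrt in H by lra.
  rewrite <- H.
  - rewrite (RInt_ext _ (fun y => scal 2 (gf y))).
    + rewrite (RInt_scal (V:=R_CompleteNormedModule)).
      unfold scal; simpl; unfold mult; simpl. f_equal. unfold Eg.
      rewrite <- (RInt_Chasles (V:=R_CompleteNormedModule) gf 0 (sqrt a) (sqrt b)).
      unfold plus; simpl. lra.
      apply exRInt_cont; intros; apply gf_cont. apply exRInt_cont; intros; apply gf_cont.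
      apply exRInt_cont; intros; apply gf_cont.
    + intros y Hy. pose proof (mnpos (sqrt a) (sqrt b) Hsa Hsb y ltac:(lra)).
      unfold scal; simpl; unfold mult; simpl. unfold ft, gf, Rpower.
      rewrite ln_mult by lra.
      replace ((1 / 2 - 1) * (ln y + ln y)) with (- ln y) by field.
      rewrite exp_Ropp, exp_ln by lra. field. lra.
  - intros y Hy. pose proof (mnpos (sqrt a) (sqrt b) Hsa Hsb y Hy). apply ft_cont. nra.
  - intros y Hy. split. auto_derive. auto. ring. apply exd_cont. auto_derive. auto.
Qed.

Lemma sqrt_pinf : filterlim sqrt (Rbar_locally p_infty) (Rbar_locally p_infty).
Proof.
  intros P [M HM]. exists (Rmax 0 M * Rmax 0 M). intros b Hb. apply HM.
  assert (H0 : 0 <= Rmax 0 M) by apply Rmax_l. assert (HM' : M <= Rmax 0 M) by apply Rmax_r.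
  apply Rle_lt_trans with (Rmax 0 M); auto.
  rewrite <- (sqrt_square (Rmax 0 M)) at 1 by exact H0.
  apply sqrt_lt_1_alt. split; [nra|exact Hb].
Qed.

Lemma sqrt_right0 : filterlim sqrt (at_right 0) (locally 0).
Proof.
  rewrite <- sqrt_0 at 2. apply cont_at_right.
  apply continuity_pt_filterlim. apply continuity_pt_sqrt. lra.
Qed.

Lemma Gamma_half : Gamma (1/2) = sqrt PI.
Proof.
  pose proof (gen_lim (Fa:=at_right 0) (Fb:=Rbar_locally p_infty) _ _ (Gamma_gen (1/2) ltac:(lra))) as L1.
  assert (L2 : filterlim (fun ab => 2 * (Eg (sqrt (snd ab)) - Eg (sqrt (fst ab)))) FP
                 (locally (2 * (sqrt PI / 2 - Eg 0)))).
  { apply lim_scal. apply lim_minus.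
    - apply (lim_snd (fun b => Eg (sqrt b))).
      apply (filterlim_comp _ _ _ sqrt Eg _ (Rbar_locally p_infty)). apply sqrt_pinf. apply Eg_lim.
    - apply (lim_fst (fun a => Eg (sqrt a))).
      apply (filterlim_comp _ _ _ sqrt Eg _ (locally 0)). apply sqrt_right0. apply Eg_cont. }
  replace (2 * (sqrt PI / 2 - Eg 0)) with (sqrt PI) in L2.
  2:{ unfold Eg. rewrite RInt_point. unfold zero; simpl. field. }
  apply (lim_unique (fun ab => RInt (ft (1/2)) (fst ab) (snd ab))). exact L1.
  eapply filterlim_ext_loc; [|exact L2].
  generalize FP_pos. apply filter_imp. intros [a b] [Ha Hb]. simpl in *. rewrite ft_half_int by auto. reflexivity.
Qed.


Definition g (x : R) : R := ln (Gamma x).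

Definition convex_on (phi : R -> R) : Prop :=
  forall x y l, 0 < x -> 0 < y -> 0 <= l <= 1 ->
    phi (l * x + (1 - l) * y) <= l * phi x + (1 - l) * phi y.

Lemma g_convex : convex_on g.
Proof. intros x y l Hx Hy Hl. apply Gamma_logconv; auto. Qed.

Lemma g_succ x : 0 < x -> g (x + 1) = g x + ln x.
Proof.
  intros Hx. unfold g. rewrite Gamma_succ by exact Hx. rewrite ln_mult. ring. exact Hx. apply Gamma_pos; exact Hx.
Qed.

Lemma g_one : g 1 = 0.
Proof. unfold g. rewrite Gamma_one. apply ln_1. Qed.

Lemma g_half : g (1/2) = ln PI / 2.
Proof.
  unfold g. rewrite Gamma_half. pose proof PI_RGT_0.
  rewrite <- (sqrt_sqrt PI) at 2 by lra. rewrite ln_mult by (apply sqrt_lt_R0; lra). field.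
Qed.

Lemma slope3 phi a b c : convex_on phi -> 0 < a -> a < b -> b < c ->
  (c - a) * phi b <= (c - b) * phi a + (b - a) * phi c.
Proof.
  intros Hc Ha Hab Hbc.
  set (l := (c - b) / (c - a)).
  assert (Hl : 0 <= l <= 1).
  { unfold l. split. apply Rmult_le_pos. lra. left; apply Rinv_0_lt_compat; lra.
    apply Rmult_le_reg_r with (c - a). lra. unfold Rdiv. rewrite Rmult_assoc, Rinv_l by lra. lra. }
  pose proof (Hc a c l Ha ltac:(lra) Hl) as H.
  replace (l * a + (1 - l) * c) with b in H by (unfold l; field; lra).
  apply Rmult_le_compat_l with (r := c - a) in H; [|lra].
  replace ((c - a) * (l * phi a + (1 - l) * phi c)) with ((c - b) * phi a + (b - a) * phi c) in H
    by (unfold l; field; lra).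
  exact H.
Qed.

Lemma convex_cont phi x : convex_on phi -> 0 < x -> continuous phi x.
Proof.
  intros Hc Hx. set (h := x / 2).
  assert (Hh : 0 < h) by (unfold h; lra).
  set (M := Rabs (phi (x + h) - phi x) + Rabs (phi x - phi (x - h))).
  assert (HM : 0 <= M) by (unfold M; pose proof (Rabs_pos (phi (x + h) - phi x)); pose proof (Rabs_pos (phi x - phi (x - h))); lra).
  assert (Hbound : forall y, Rabs (y - x) < h -> h * Rabs (phi y - phi x) <= Rabs (y - x) * M).
  { intros y Hy. apply Rabs_def2 in Hy.
    pose proof (Rle_abs (phi (x + h) - phi x)). pose proof (Rle_abs (- (phi (x + h) - phi x))).
    pose proof (Rle_abs (phi x - phi (x - h))). pose proof (Rle_abs (- (phi x - phi (x - h)))).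
    rewrite Rabs_Ropp in *.
    destruct (Rtotal_order y x) as [Hlt|[Heq|Hgt]].
    - pose proof (slope3 phi (x - h) y x Hc ltac:(unfold h in *; lra) ltac:(lra) Hlt) as S1.
      pose proof (slope3 phi y x (x + h) Hc ltac:(unfold h in *; lra) Hlt ltac:(lra)) as S2.
      rewrite (Rabs_left (y - x)) by lra. unfold M.
      assert (A1 : (x - y) * (phi (x - h) - phi x) <= (x - y) * Rabs (phi x - phi (x - h))) by (apply Rmult_le_compat_l; lra).
      assert (A2 : (x - y) * (phi x - phi (x + h)) <= (x - y) * Rabs (phi (x + h) - phi x)) by (apply Rmult_le_compat_l; lra).
      assert (A3 : 0 <= (x - y) * Rabs (phi (x + h) - phi x)) by (apply Rmult_le_pos; [lra|apply Rabs_pos]).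
      assert (A4 : 0 <= (x - y) * Rabs (phi x - phi (x - h))) by (apply Rmult_le_pos; [lra|apply Rabs_pos]).
      replace (x - h - (x - h)) with 0 in * by ring.
      rewrite <- (Rabs_pos_eq h) at 1 by lra. rewrite <- Rabs_mult. apply Rabs_le. split; nra.
    - subst y. rewrite !Rminus_diag, !Rabs_R0. right; ring.
    - pose proof (slope3 phi x y (x + h) Hc Hx Hgt ltac:(lra)) as S1.
      pose proof (slope3 phi (x - h) x y Hc ltac:(unfold h in *; lra) ltac:(lra) Hgt) as S2.
      rewrite (Rabs_right (y - x)) by lra. unfold M.
      assert (A1 : (y - x) * (phi (x + h) - phi x) <= (y - x) * Rabs (phi (x + h) - phi x)) by (apply Rmult_le_compat_l; lra).
      assert (A2 : (y - x) * (phi (x - h) - phi x) <= (y - x) * Rabs (phi x - phi (x - h))) by (apply Rmult_le_compat_l; lra).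
      assert (A3 : 0 <= (y - x) * Rabs (phi (x + h) - phi x)) by (apply Rmult_le_pos; [lra|apply Rabs_pos]).
      assert (A4 : 0 <= (y - x) * Rabs (phi x - phi (x - h))) by (apply Rmult_le_pos; [lra|apply Rabs_pos]).
      rewrite <- (Rabs_pos_eq h) at 1 by lra. rewrite <- Rabs_mult. apply Rabs_le. split; nra. }
  apply filterlim_locally. intros eps.
  assert (Hd : 0 < Rmin h (eps * h / (M + 1))).
  { apply Rmin_glb_lt. exact Hh. apply Rdiv_lt_0_compat. destruct eps; simpl; nra. lra. }
  exists (mkposreal _ Hd). intros y Hy. apply ball_R. apply ball_R in Hy. simpl in Hy.
  assert (H1 : Rabs (y - x) < h) by (eapply Rlt_le_trans; [exact Hy|apply Rmin_l]).
  assert (H2 : Rabs (y - x) < eps * h / (M + 1)) by (eapply Rlt_le_trans; [exact Hy|apply Rmin_r]).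
  specialize (Hbound y H1).
  assert (H3 : Rabs (y - x) * (M + 1) < eps * h).
  { apply Rmult_lt_compat_r with (r := M + 1) in H2; [|lra].
    unfold Rdiv in H2. rewrite Rmult_assoc, Rinv_l, Rmult_1_r in H2 by lra. exact H2. }
  pose proof (Rabs_pos (y - x)). pose proof (Rabs_pos (phi y - phi x)).
  destruct eps as [e He]. simpl in *. nra.
Qed.

Section BM.
Variables phi psi : R -> R.
Hypothesis Hcp : convex_on phi.
Hypothesis Hcq : convex_on psi.
Hypothesis Hfp : forall x, 0 < x -> phi (x + 1) = phi x + ln x.
Hypothesis Hfq : forall x, 0 < x -> psi (x + 1) = psi x + ln x.
Hypothesis H1 : phi 1 = psi 1.

Let d x := phi x - psi x.

Lemma d_shift m x : 0 < x -> d (x + INR m) = d x.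
Proof.
  induction m as [|m IH]; intros Hx.
  - simpl. rewrite Rplus_0_r. reflexivity.
  - rewrite S_INR. replace (x + (INR m + 1)) with ((x + INR m) + 1) by ring.
    rewrite <- (IH Hx). pose proof (pos_INR m).
    unfold d. rewrite Hfp, Hfq by lra. ring.
Qed.

Lemma conv_bounds (f : R -> R) y x : convex_on f -> (forall x, 0 < x -> f (x + 1) = f x + ln x) ->
  2 <= y -> 0 < x < 1 ->
  x * ln (y - 1) <= f (y + x) - f y <= x * ln y.
Proof.
  intros Hc Hf Hy Hx.
  pose proof (slope3 f (y - 1) y (y + x) Hc ltac:(lra) ltac:(lra) ltac:(lra)) as S1.
  pose proof (slope3 f y (y + x) (y + 1) Hc ltac:(lra) ltac:(lra) ltac:(lra)) as S2.
  pose proof (Hf (y - 1) ltac:(lra)) as E1. replace (y - 1 + 1) with y in E1 by ring.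
  pose proof (Hf y ltac:(lra)) as E2.
  rewrite E2 in S2. rewrite E1 in S1.
  split; nra.
Qed.

Lemma d_small x : 0 < x < 1 -> forall m, (0 < m)%nat -> Rabs (d x) <= x / INR m.
Proof.
  intros Hx m Hm.
  assert (Hm1 : 1 <= INR m) by (apply (le_INR 1); lia).
  set (y := INR m + 1).
  pose proof (conv_bounds phi y x Hcp Hfp ltac:(unfold y; lra) Hx) as B1.
  pose proof (conv_bounds psi y x Hcq Hfq ltac:(unfold y; lra) Hx) as B2.
  assert (E1 : d (y + x) = d x).
  { unfold y. replace (INR m + 1 + x) with (x + INR (S m)) by (rewrite S_INR; ring). apply d_shift; lra. }
  assert (E2 : d y = 0).
  { unfold y. rewrite Rplus_comm. rewrite d_shift by lra. unfold d. rewrite H1. ring. }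
  assert (Hln : ln y - ln (y - 1) <= 1 / INR m).
  { unfold y. replace (INR m + 1 - 1) with (INR m) by ring.
    pose proof (ln_le_sub1 ((INR m + 1) / INR m) ltac:(apply Rdiv_lt_0_compat; lra)).
    unfold Rdiv in H. rewrite ln_mult, ln_Rinv in H by (try apply Rinv_0_lt_compat; lra).
    replace ((INR m + 1) * / INR m - 1) with (1 / INR m) in H by (field; lra). lra. }
  assert (Hd : - (x * (ln y - ln (y - 1))) <= d x <= x * (ln y - ln (y - 1))).
  { rewrite <- E1. replace (d (y + x)) with ((phi (y + x) - phi y) - (psi (y + x) - psi y)).
    split; nra. unfold d in *. lra. }
  assert (Hxl : x * (ln y - ln (y - 1)) <= x / INR m).
  { unfold Rdiv. replace (x * / INR m) with (x * (1 / INR m)) by (field; lra). apply Rmult_le_compat_l; lra. }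
  apply Rabs_le. lra.
Qed.

Lemma d_zero01 x : 0 < x < 1 -> d x = 0.
Proof.
  intros Hx. destruct (Req_dec (d x) 0) as [H|H]; auto. exfalso.
  assert (Hp : 0 < Rabs (d x)) by (apply Rabs_pos_lt; exact H).
  destruct (archimed_cor1 (Rabs (d x)) Hp) as [N [HN HN0]].
  pose proof (d_small x Hx N HN0).
  assert (x / INR N < / INR N).
  { unfold Rdiv. rewrite <- (Rmult_1_l (/ INR N)) at 2. apply Rmult_lt_compat_r.
    apply Rinv_0_lt_compat. apply lt_0_INR; exact HN0. lra. }
  lra.
Qed.

Lemma BM_unique x : 0 < x -> phi x = psi x.
Proof.
  intros Hx.
  assert (P : forall n : nat, forall x, 0 < x <= INR n + 1 -> d x = 0).
  { induction n as [|n IH]; intros z Hz.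
    - simpl in Hz. destruct (Req_dec z 1) as [->|Hz1]. unfold d; rewrite H1; ring.
      apply d_zero01. lra.
    - rewrite S_INR in Hz. destruct (Rle_lt_dec z (INR n + 1)) as [Hle|Hgt].
      + apply IH; lra.
      + replace z with ((z - 1) + 1) by ring. unfold d. rewrite Hfp, Hfq by (pose proof (pos_INR n); lra).
        fold (d (z - 1)). replace (phi (z - 1) + ln (z - 1) - (psi (z - 1) + ln (z - 1))) with (d (z - 1)) by (unfold d; ring).
        apply IH. pose proof (pos_INR n). lra. }
  destruct (nfloor_ex x ltac:(lra)) as [n Hn].
  assert (d x = 0) by (apply (P n); lra). unfold d in H. lra.
Qed.

End BM.


Fixpoint sumR (n : nat) (f : nat -> R) : R :=
  match n with
  | O => 0
  | S k => sumR k f + f k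
  end.

Lemma sumR_ext n f h : (forall j, (j < n)%nat -> f j = h j) -> sumR n f = sumR n h.
Proof.
  induction n as [|n IH]; intros H; simpl. reflexivity.
  f_equal. apply IH. intros; apply H; lia. apply H; lia.
Qed.

Lemma sumR_plus n f h : sumR n (fun j => f j + h j) = sumR n f + sumR n h.
Proof. induction n as [|n IH]; simpl. ring. rewrite IH. ring. Qed.

Lemma sumR_scal n c f : sumR n (fun j => c * f j) = c * sumR n f.
Proof. induction n as [|n IH]; simpl. ring. rewrite IH. ring. Qed.

Lemma sumR_const n c : sumR n (fun _ => c) = INR n * c.
Proof. induction n as [|n IH]; simpl sumR. simpl. ring. rewrite IH, S_INR. ring. Qed.

Lemma sumR_le n f h : (forall j, (j < n)%nat -> f j <= h j) -> sumR n f <= sumR n h.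
Proof.
  induction n as [|n IH]; intros H; simpl. lra.
  apply Rplus_le_compat. apply IH. intros; apply H; lia. apply H; lia.
Qed.

Lemma sumR_tele n (G : nat -> R) : sumR n (fun j => G (S j) - G j) = G n - G O.
Proof. induction n as [|n IH]; simpl. ring. rewrite IH. ring. Qed.

Lemma prodR_exp n f : prodR n (fun j => exp (f j)) = exp (sumR n f).
Proof. induction n as [|n IH]; simpl. rewrite exp_0; reflexivity. rewrite IH, exp_plus. reflexivity. Qed.

Section Gauss.
Variable n : nat.
Hypothesis Hn : (1 <= n)%nat.
Let N := INR n.
Lemma N_pos : 0 < N.
Proof. unfold N. apply lt_0_INR. lia. Qed.

Let Dn := sumR n (fun j => g ((1 + INR j) / N)) + ln N.
Let phi x := sumR n (fun j => g ((x + INR j) / N)) + x * ln N - Dn.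

Lemma phi_convex : convex_on phi.
Proof.
  intros x y l Hx Hy Hl. pose proof N_pos. unfold phi.
  assert (S : sumR n (fun j => g ((l * x + (1 - l) * y + INR j) / N))
              <= l * sumR n (fun j => g ((x + INR j) / N)) + (1 - l) * sumR n (fun j => g ((y + INR j) / N))).
  { rewrite <- !sumR_scal, <- sumR_plus. apply sumR_le. intros j _.
    pose proof (pos_INR j).
    replace ((l * x + (1 - l) * y + INR j) / N) with (l * ((x + INR j) / N) + (1 - l) * ((y + INR j) / N)) by (field; lra).
    apply g_convex; try lra; apply Rdiv_lt_0_compat; lra. }
  nra.
Qed.

Lemma phi_succ x : 0 < x -> phi (x + 1) = phi x + ln x.
Proof.
  intros Hx. pose proof N_pos. unfold phi.
  assert (T : sumR n (fun j => g ((x + 1 + INR j) / N)) - sumR n (fun j => g ((x + INR j) / N)) = ln (x / N)).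
  { set (G := fun j => g ((x + INR j) / N)).
    replace (sumR n (fun j => g ((x + 1 + INR j) / N))) with (sumR n (fun j => G (S j))).
    2:{ apply sumR_ext. intros j _. unfold G. rewrite S_INR. f_equal. f_equal. ring. }
    replace (sumR n (fun j => G (S j)) - sumR n G) with (sumR n (fun j => G (S j) - G j)).
    2:{ unfold Rminus. rewrite sumR_plus. f_equal. rewrite <- (Rmult_1_l (sumR n G)).
        rewrite Ropp_mult_distr_l, <- sumR_scal. apply sumR_ext. intros; ring. }
    rewrite sumR_tele. unfold G. simpl INR. fold N.
    replace ((x + N) / N) with (x / N + 1) by (field; lra). replace ((x + 0) / N) with (x / N) by (field; lra).
    rewrite g_succ. ring. apply Rdiv_lt_0_compat; lra. }
  unfold Rdiv in T. rewrite ln_mult, ln_Rinv in T by (try apply Rinv_0_lt_compat; lra). lra.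
Qed.

Lemma phi_one : phi 1 = 0.
Proof. unfold phi, Dn. ring. Qed.

Lemma gauss_mult x : 0 < x ->
  sumR n (fun j => g ((x + INR j) / INR n)) + x * ln (INR n) = g x + Dn.
Proof.
  intros Hx. pose proof (BM_unique phi g phi_convex g_convex phi_succ g_succ ltac:(rewrite phi_one, g_one; reflexivity) x Hx).
  unfold phi in H. fold N. lra.
Qed.

End Gauss.


Lemma g_cont x : 0 < x -> continuous g x.
Proof. intros Hx. apply convex_cont. apply g_convex. exact Hx. Qed.

Lemma g_exRInt a b : 0 < a -> 0 < b -> ex_RInt g a b.
Proof. intros Ha Hb. apply exRInt_cont. intros z Hz. apply g_cont. apply (mnpos a b Ha Hb z Hz). Qed.

Lemma g_RInt_deriv a x : 0 < a -> 0 < x -> is_derive (fun y => RInt g a y) x (g x).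
Proof.
  intros Ha Hx. apply (is_derive_RInt g (fun y => RInt g a y) a x).
  - exists (mkposreal (x / 2) ltac:(lra)). intros y Hy. rball Hy. simpl in Hy.
    apply (RInt_correct (V:=R_CompleteNormedModule)). apply g_exRInt; lra.
  - apply g_cont; exact Hx.
Qed.

Definition Q x := RInt g x (x + 1).

Lemma Q_split x : 0 < x -> Q x = RInt g 1 (x + 1) - RInt g 1 x.
Proof.
  intros Hx. unfold Q. rewrite <- (RInt_Chasles (V:=R_CompleteNormedModule) g 1 x (x + 1)).
  unfold plus; simpl. lra. apply g_exRInt; lra. apply g_exRInt; lra.
Qed.

Lemma const_of_deriv0 (f : R -> R) a b : 0 < a -> 0 < b ->
  (forall x, 0 < x -> is_derive f x 0) -> f b = f a.
Proof.
  intros Ha Hb Hd.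
  pose proof (is_RInt_derive (V:=R_CompleteNormedModule) f (fun _ => 0) a b) as H.
  assert (H1 : is_RInt (fun _ : R => 0) a b (minus (f b) (f a))).
  { apply H. intros x Hx; apply Hd. apply (mnpos a b Ha Hb x Hx). intros; apply continuous_const. }
  pose proof (is_RInt_const (V:=R_NormedModule) a b 0) as H2.
  apply (is_RInt_unique (V:=R_CompleteNormedModule)) in H1.
  apply (is_RInt_unique (V:=R_CompleteNormedModule)) in H2.
  rewrite H1 in H2. unfold minus, plus, opp, scal in H2; simpl in H2; unfold mult in H2; simpl in H2. lra.
Qed.

Lemma Q_form0 x : 0 < x -> Q x = (Q 1 + 1) + x * ln x - x.
Proof.
  intros Hx.
  set (R0 := fun y => RInt g 1 (y + 1) - RInt g 1 y - y * ln y + y).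
  assert (HR : R0 x = R0 1).
  { apply const_of_deriv0; try lra. intros y Hy. unfold R0.
    replace 0 with (1 * g (y + 1) - g y - (1 * ln y + y * / y) + 1).
    2:{ rewrite g_succ by lra. field. lra. }
    apply (is_derive_plus (fun y => RInt g 1 (y + 1) - RInt g 1 y - y * ln y) (fun y => y)).
    apply (is_derive_minus (fun y => RInt g 1 (y + 1) - RInt g 1 y) (fun y => y * ln y)).
    apply (is_derive_minus (fun y => RInt g 1 (y + 1)) (fun y => RInt g 1 y)).
    apply (is_derive_comp (fun z => RInt g 1 z) (fun y => y + 1)).
    apply g_RInt_deriv; lra. auto_derive; auto; try ring.
    apply g_RInt_deriv; lra.
    auto_derive; try lra; try ring.
    auto_derive; auto; try ring. }
  unfold R0 in HR. rewrite Q_split by lra. rewrite (Q_split 1) by lra.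
  rewrite ln_1 in HR. lra.
Qed.

Lemma dup x : 0 < x -> g (x / 2) + g ((x + 1) / 2) + x * ln 2 = g x + (g (1 / 2) + ln 2).
Proof.
  intros Hx. pose proof (gauss_mult 2 ltac:(lia) x Hx) as H.
  replace (INR 2) with 2 in H by (simpl; ring). simpl sumR in H.
  replace ((x + 0) / 2) with (x / 2) in H by field. replace ((x + 1) / 2) with ((x + 1) / 2) in H by field.
  replace ((1 + 0) / 2) with (1 / 2) in H by field. replace ((1 + 1) / 2) with 1 in H by field.
  rewrite g_one in H. lra.
Qed.

Lemma Q1_val : Q 1 + 1 = ln (2 * PI) / 2.
Proof.
  set (C := g (1 / 2) + ln 2).
  set (T := fun x => 2 * RInt g (1/2) (x / 2) + 2 * RInt g 1 ((x + 1) / 2) + x * x * ln 2 / 2 - RInt g 1 x - C * x).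
  assert (HT : T 2 = T 1).
  { apply const_of_deriv0; try lra. intros y Hy. unfold T.
    replace 0 with (2 * (/ 2 * g (y / 2)) + 2 * (/ 2 * g ((y + 1) / 2)) + (2 * y * ln 2 / 2) - g y - C * 1).
    2:{ pose proof (dup y Hy). fold C in H. lra. }
    apply (is_derive_minus (fun x => 2 * RInt g (1/2) (x / 2) + 2 * RInt g 1 ((x + 1) / 2) + x * x * ln 2 / 2 - RInt g 1 x) (fun x => C * x)).
    apply (is_derive_minus (fun x => 2 * RInt g (1/2) (x / 2) + 2 * RInt g 1 ((x + 1) / 2) + x * x * ln 2 / 2) (fun x => RInt g 1 x)).
    apply (is_derive_plus (fun x => 2 * RInt g (1/2) (x / 2) + 2 * RInt g 1 ((x + 1) / 2)) (fun x => x * x * ln 2 / 2)).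
    apply (is_derive_plus (fun x => 2 * RInt g (1/2) (x / 2)) (fun x => 2 * RInt g 1 ((x + 1) / 2))).
    - apply (is_derive_scal (fun x => RInt g (1/2) (x / 2))).
      apply (is_derive_comp (fun z => RInt g (1/2) z) (fun x => x / 2)).
      apply g_RInt_deriv; lra. auto_derive; auto; try field.
    - apply (is_derive_scal (fun x => RInt g 1 ((x + 1) / 2))).
      apply (is_derive_comp (fun z => RInt g 1 z) (fun x => (x + 1) / 2)).
      apply g_RInt_deriv; lra. auto_derive; auto; try field.
    - auto_derive; auto; try field.
    - apply g_RInt_deriv; lra.
    - auto_derive; auto; try ring. }
  unfold T in HT.
  assert (E1 : 2 / 2 = 1) by field. assert (E2 : (2 + 1) / 2 = 3 / 2) by field.
  assert (E3 : 1 / 2 = / 2) by field. assert (E4 : (1 + 1) / 2 = 1) by field.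
  rewrite E1, E2, E3, E4 in HT.
  rewrite !RInt_point in HT. unfold zero in HT; simpl in HT.
  assert (HQ : Q (/ 2) = RInt g (/ 2) 1 + RInt g 1 (3 / 2)).
  { unfold Q. replace (/ 2 + 1) with (3 / 2) by field.
    rewrite <- (RInt_Chasles (V:=R_CompleteNormedModule) g (/ 2) 1 (3 / 2)). reflexivity.
    apply g_exRInt; lra. apply g_exRInt; lra. }
  assert (HQ1 : Q 1 = RInt g 1 2) by (unfold Q; f_equal; ring).
  pose proof (Q_form0 (/ 2) ltac:(lra)) as F.
  rewrite ln_Rinv in F by lra.
  unfold C in HT. rewrite g_half in HT.
  rewrite ln_mult by (try pose proof PI_RGT_0; lra).
  replace (/ 2 * / 2 * ln 2 / 2) with (ln 2 / 8) in HT by field.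
  lra.
Qed.

Lemma Q_form x : 0 < x -> Q x = ln (2 * PI) / 2 + x * ln x - x.
Proof. intros Hx. rewrite Q_form0 by exact Hx. rewrite Q1_val. reflexivity. Qed.


Lemma ln_nonpos x : x <= 0 -> ln x = 0.
Proof. intros H. unfold ln. case (Rlt_dec 0 x); intros; [exfalso; lra|reflexivity]. Qed.

Definition tlnt (t : R) : R := t * ln t.

Lemma tlnt_bound y : 0 < y <= 1 -> Rabs (tlnt y) <= 2 * sqrt y.
Proof.
  intros Hy. unfold tlnt. set (s := sqrt y).
  assert (Hs : 0 < s) by (apply sqrt_lt_R0; lra).
  assert (Hss : s * s = y) by (apply sqrt_sqrt; lra).
  assert (Hs1 : s <= 1). { unfold s. rewrite <- sqrt_1. apply sqrt_le_1_alt. lra. }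
  assert (Hl : ln y = 2 * ln s). { rewrite <- Hss, ln_mult by lra. ring. }
  assert (Hl0 : ln s <= 0). { rewrite <- ln_1. apply ln_le; lra. }
  pose proof (ln_le_sub1 (/ s) ltac:(apply Rinv_0_lt_compat; lra)) as H.
  rewrite ln_Rinv in H by lra.
  assert (Hq : - ln s * s <= 1). { apply Rmult_le_reg_r with (/ s). apply Rinv_0_lt_compat; lra.
    rewrite Rmult_assoc, Rinv_r, Rmult_1_r, Rmult_1_l by lra. lra. }
  rewrite Hl, <- Hss. rewrite Rabs_left1 by nra. nra.
Qed.

Lemma tlnt_cont t : continuous tlnt t.
Proof.
  destruct (Rtotal_order t 0) as [Hlt|[Heq|Hgt]].
  - apply (filterlim_ext_loc (fun _ => 0)).
    + exists (mkposreal (- t) ltac:(lra)). intros y Hy. rball Hy. simpl in Hy.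
      unfold tlnt. rewrite ln_nonpos by lra. ring.
    + unfold tlnt. rewrite ln_nonpos by lra. rewrite Rmult_0_r. apply filterlim_const.
  - subst t. apply filterlim_locally. intros eps.
    assert (Hd : 0 < Rmin 1 ((eps / 2) * (eps / 2))).
    { apply Rmin_glb_lt. lra. destruct eps; simpl. nra. }
    exists (mkposreal _ Hd). intros y Hy. apply ball_R. rball Hy. simpl in Hy.
    pose proof (Rmin_l 1 ((eps / 2) * (eps / 2))). pose proof (Rmin_r 1 ((eps / 2) * (eps / 2))).
    unfold tlnt at 2. rewrite Rmult_0_l, Rminus_0_r.
    destruct (Rle_lt_dec y 0) as [Hy0|Hy0].
    + unfold tlnt. rewrite ln_nonpos by lra. rewrite Rmult_0_r, Rabs_R0. destruct eps; simpl; lra.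
    + eapply Rle_lt_trans. apply tlnt_bound. lra.
      assert (sqrt y < eps / 2).
      { rewrite <- (sqrt_square (eps / 2)) by (destruct eps; simpl; lra). apply sqrt_lt_1_alt. lra. }
      lra.
  - apply exd_cont. unfold tlnt. auto_derive. lra.
Qed.

Lemma tlnt_right0 : filterlim tlnt (at_right 0) (locally 0).
Proof.
  replace 0 with (tlnt 0) at 2 by (unfold tlnt; ring). apply cont_at_right. apply tlnt_cont.
Qed.

Lemma tlnt_deriv t : 0 < t -> is_derive tlnt t (ln t + 1).
Proof. intros Ht. unfold tlnt. auto_derive. lra. field. lra. Qed.

Lemma RIntg1_deriv x : 0 < x -> is_derive (fun y => RInt g 1 y) x (g x).
Proof. intros Hx. apply g_RInt_deriv; lra. Qed.

Definition c2 := ln (2 * PI) / 2.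

Definition Lam (x : R) : R :=
  RInt g 1 (x + 1) - tlnt x + x + x * (x - 1) / 2 - x * c2.

Lemma Lam_cont x : -1 < x -> continuous Lam x.
Proof.
  intros Hx. unfold Lam.
  apply (continuous_minus (fun y => RInt g 1 (y + 1) - tlnt y + y + y * (y - 1) / 2) (fun y => y * c2)).
  apply (continuous_plus (fun y => RInt g 1 (y + 1) - tlnt y + y) (fun y => y * (y - 1) / 2)).
  apply (continuous_plus (fun y => RInt g 1 (y + 1) - tlnt y) (fun y => y)).
  apply (continuous_minus (fun y => RInt g 1 (y + 1)) tlnt).
  - apply exd_cont. eexists. apply (is_derive_comp (fun z => RInt g 1 z) (fun y => y + 1)).
    apply RIntg1_deriv; lra. auto_derive; auto.
  - apply tlnt_cont.
  - apply continuous_id.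
  - apply exd_cont. auto_derive; auto.
  - apply exd_cont. auto_derive; auto.
Qed.

Lemma Lam_deriv x : 0 < x -> is_derive Lam x (g x + x - / 2 - c2).
Proof.
  intros Hx. unfold Lam.
  replace (g x + x - / 2 - c2) with (1 * g (x + 1) - (ln x + 1) + 1 + (2 * x - 1) / 2 - c2).
  2:{ rewrite g_succ by lra. field. }
  apply (is_derive_minus (fun y => RInt g 1 (y + 1) - tlnt y + y + y * (y - 1) / 2) (fun y => y * c2)).
  apply (is_derive_plus (fun y => RInt g 1 (y + 1) - tlnt y + y) (fun y => y * (y - 1) / 2)).
  apply (is_derive_plus (fun y => RInt g 1 (y + 1) - tlnt y) (fun y => y)).
  apply (is_derive_minus (fun y => RInt g 1 (y + 1)) tlnt).
  - apply (is_derive_comp (fun z => RInt g 1 z) (fun y => y + 1)).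
    apply RIntg1_deriv; lra. auto_derive; auto; try ring.
  - apply tlnt_deriv; exact Hx.
  - auto_derive; auto; try ring.
  - auto_derive; auto; try field.
  - auto_derive; auto; try ring.
Qed.

Lemma Lam_succ x : 0 < x -> Lam (x + 1) = Lam x + tlnt x.
Proof.
  intros Hx. unfold Lam.
  pose proof (Q_form (x + 1) ltac:(lra)) as HQ. rewrite Q_split in HQ by lra.
  unfold c2, tlnt. lra.
Qed.


Lemma RInt_shift1 (f : R -> R) a b : ex_RInt f (a + 1) (b + 1) ->
  RInt (fun t => f (t + 1)) a b = RInt f (a + 1) (b + 1).
Proof.
  intros H. pose proof (RInt_comp_lin (V:=R_CompleteNormedModule) f 1 1 a b) as E.
  replace (1 * a + 1) with (a + 1) in E by ring. replace (1 * b + 1) with (b + 1) in E by ring.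
  rewrite <- E by exact H. apply RInt_ext. intros t _. unfold scal; simpl; unfold mult; simpl.
  rewrite Rmult_1_l. f_equal. ring.
Qed.

Lemma RInt_ln a b : 0 < a -> 0 < b -> RInt ln a b = (tlnt b - b) - (tlnt a - a).
Proof.
  intros Ha Hb. apply (is_RInt_unique (V:=R_CompleteNormedModule)).
  apply (is_RInt_derive (fun t => tlnt t - t) ln).
  - intros x Hx. pose proof (mnpos a b Ha Hb x Hx). unfold tlnt. auto_derive. lra. field. lra.
  - intros x Hx. pose proof (mnpos a b Ha Hb x Hx). apply exd_cont. auto_derive. lra.
Qed.

Lemma RInt_g_shift a x : 0 < a -> 0 < x ->
  RInt g a x = RInt g (a + 1) (x + 1) - (tlnt x - x) + (tlnt a - a).
Proof.
  intros Ha Hx.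
  rewrite (RInt_ext g (fun t => minus (g (t + 1)) (ln t))).
  2:{ intros t Ht. assert (0 < t) by (apply Rlt_le_trans with (Rmin a x); [apply Rmin_glb_lt|]; lra).
      unfold minus, plus, opp; simpl. rewrite g_succ by lra. ring. }
  rewrite (RInt_minus (V:=R_CompleteNormedModule)).
  - rewrite RInt_shift1 by (apply g_exRInt; lra). rewrite RInt_ln by lra.
    unfold minus, plus, opp; simpl. ring.
  - apply exRInt_cont. intros z Hz. pose proof (mnpos a x Ha Hx z Hz).
    apply (continuous_comp (fun t => t + 1) g). apply exd_cont; auto_derive; auto. apply g_cont; lra.
  - apply exRInt_cont. intros z Hz. pose proof (mnpos a x Ha Hx z Hz). apply exd_cont. auto_derive. lra.
Qed.

Lemma lnK_gen x : 0 < x ->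
  is_RInt_gen g (at_right 0) (at_point x) (RInt g 1 (x + 1) - (tlnt x - x)).
Proof.
  intros Hx. apply mk_gen.
  - apply (Filter_prod _ _ _ (fun a => 0 < a) (fun b => b = x)). apply at_right_pos. reflexivity.
    intros a b Ha Hb. simpl. subst b. apply g_exRInt; lra.
  - apply (filterlim_ext_loc (fun ab => RInt g (fst ab + 1) (x + 1) - (tlnt x - x) + (tlnt (fst ab) - fst ab))).
    + apply (Filter_prod _ _ _ (fun a => 0 < a) (fun b => b = x)). apply at_right_pos. reflexivity.
      intros a b Ha Hb. simpl. subst b. symmetry. apply RInt_g_shift; lra.
    + apply (lim_fst (fun a => RInt g (a + 1) (x + 1) - (tlnt x - x) + (tlnt a - a))).
      assert (C : filterlim (fun a => RInt g (a + 1) (x + 1) - (tlnt x - x) + (tlnt a - a)) (at_right 0)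
                    (locally ((fun a => RInt g (a + 1) (x + 1) - (tlnt x - x) + (tlnt a - a)) 0))).
      { apply (cont_at_right (fun a => RInt g (a + 1) (x + 1) - (tlnt x - x) + (tlnt a - a)) 0).
      apply (continuous_plus (fun a => RInt g (a + 1) (x + 1) - (tlnt x - x)) (fun a => tlnt a - a)).
      apply (continuous_minus (fun a => RInt g (a + 1) (x + 1)) (fun a => tlnt x - x)).
      * apply exd_cont. eexists.
        apply (is_derive_comp (fun z => RInt g z (x + 1)) (fun a => a + 1)).
        apply (is_derive_RInt' g (fun z => RInt g z (x + 1)) (0 + 1) (x + 1)).
        exists (mkposreal (1 / 2) ltac:(lra)). intros y Hy. rball Hy. simpl in Hy.
        apply (RInt_correct (V:=R_CompleteNormedModule)). apply g_exRInt; lra.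
        apply g_cont; lra.
        auto_derive; auto.
      * apply continuous_const.
      * apply (continuous_minus tlnt (fun a => a)). apply tlnt_cont. apply continuous_id. }
      assert (E : RInt g (0 + 1) (x + 1) - (tlnt x - x) + (tlnt 0 - 0) = RInt g 1 (x + 1) - (tlnt x - x))
        by (unfold tlnt; rewrite Rplus_0_l; ring).
      cbv beta in C. rewrite E in C. exact C.
Qed.

Lemma lnK_Lam x : 0 < x -> lnK x = Lam x.
Proof.
  intros Hx. unfold lnK, Lam.
  assert (E : RInt_gen (fun t => ln (Gamma t)) (at_right 0) (at_point x) = RInt g 1 (x + 1) - (tlnt x - x)).
  { apply (is_RInt_gen_unique (V:=R_CompleteNormedModule)). apply lnK_gen; exact Hx. }
  rewrite E. unfold c2. field.
Qed.


Lemma is_derive_sumR n (f : nat -> R -> R) (df : nat -> R) x :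
  (forall j, (j < n)%nat -> is_derive (f j) x (df j)) ->
  is_derive (fun y => sumR n (fun j => f j y)) x (sumR n df).
Proof.
  induction n as [|n IH]; intros H; simpl.
  - apply (is_derive_const (K:=R_AbsRing) (V:=R_NormedModule) 0).
  - apply (is_derive_plus (fun y => sumR n (fun j => f j y)) (f n)).
    apply IH. intros; apply H; lia. apply H; lia.
Qed.

Lemma Lam_shift_deriv c x : 0 < x + c -> is_derive (fun y => Lam (y + c)) x (g (x + c) + (x + c) - / 2 - c2).
Proof.
  intros H.
  replace (g (x + c) + (x + c) - / 2 - c2) with (scal 1 (g (x + c) + (x + c) - / 2 - c2))
    by (unfold scal; simpl; unfold mult; simpl; ring).
  apply (is_derive_comp Lam (fun y => y + c)). apply Lam_deriv; exact H. auto_derive; auto; ring.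
Qed.

Section FConst.
Variable n : nat.
Hypothesis Hn : (1 <= n)%nat.
Let N := INR n.
Let HN : 0 < N.
Proof. unfold N. apply lt_0_INR. lia. Qed.

Definition Fn (x : R) : R :=
  Lam (INR n * x) - INR n * sumR n (fun j => Lam (x + INR j / INR n))
  - (INR n * x * (INR n * x - 1) / 2) * ln (INR n).

Let Dn := sumR n (fun j => g ((1 + INR j) / N)) + ln N.
Let S1 := sumR n (fun j => INR j / N).
Let kap := - N * Dn - N * (/ 2 + c2) - N * S1 + N * N * (/ 2 + c2) + N / 2 * ln N.

Lemma Fn_deriv x : 0 < x -> is_derive Fn x kap.
Proof.
  intros Hx. unfold Fn. fold N.
  assert (H1 : is_derive (fun y => Lam (N * y)) x (N * (g (N * x) + N * x - / 2 - c2))).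
  { assert (Hl : is_derive (fun y => N * y) x N) by (auto_derive; auto; ring).
    pose proof (is_derive_comp Lam (fun y => N * y) x _ _ (Lam_deriv (N * x) ltac:(nra)) Hl) as H. exact H. }
  assert (H2 : is_derive (fun y => sumR n (fun j => Lam (y + INR j / N))) x
                 (sumR n (fun j => g (x + INR j / N) + (x + INR j / N) - / 2 - c2))).
  { apply (is_derive_sumR n (fun j y => Lam (y + INR j / N))). intros j _. apply Lam_shift_deriv.
    pose proof (pos_INR j). assert (0 <= INR j / N) by (apply Rmult_le_pos; [lra|left; apply Rinv_0_lt_compat; lra]). lra. }
  assert (H3 : is_derive (fun y => N * y * (N * y - 1) / 2 * ln N) x ((N * (N * x - 1) + N * x * N) / 2 * ln N))
    by (auto_derive; auto; field).
  assert (HD : is_derive (fun y => Lam (N * y) - N * sumR n (fun j => Lam (y + INR j / N)) - N * y * (N * y - 1) / 2 * ln N) x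
      (N * (g (N * x) + N * x - / 2 - c2) - N * sumR n (fun j => g (x + INR j / N) + (x + INR j / N) - / 2 - c2)
       - (N * (N * x - 1) + N * x * N) / 2 * ln N)).
  { apply (is_derive_minus (fun y => Lam (N * y) - N * sumR n (fun j => Lam (y + INR j / N))) (fun y => N * y * (N * y - 1) / 2 * ln N)).
    apply (is_derive_minus (fun y => Lam (N * y)) (fun y => N * sumR n (fun j => Lam (y + INR j / N)))).
    exact H1. apply (is_derive_scal (fun y => sumR n (fun j => Lam (y + INR j / N)))). exact H2. exact H3. }
  replace kap with (N * (g (N * x) + N * x - / 2 - c2) - N * sumR n (fun j => g (x + INR j / N) + (x + INR j / N) - / 2 - c2)
       - (N * (N * x - 1) + N * x * N) / 2 * ln N).
  exact HD.
  pose proof (gauss_mult n Hn (N * x) ltac:(nra)) as G. fold N in G.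
  rewrite (sumR_ext n (fun j => g ((N * x + INR j) / N)) (fun j => g (x + INR j / N))) in G
    by (intros; f_equal; field; lra).
  rewrite (sumR_ext n (fun j => g (x + INR j / N) + (x + INR j / N) - / 2 - c2)
            (fun j => g (x + INR j / N) + (INR j / N + (x - / 2 - c2)))) by (intros; ring).
  rewrite sumR_plus, sumR_plus, sumR_const. fold N. fold S1.
  unfold kap, Dn. fold N in G. nra.
Qed.

Lemma sumR_shift m (G : nat -> R) : sumR m (fun j => G (S j)) = sumR m G + G m - G O.
Proof. induction m as [|m IH]; simpl. ring. rewrite IH. ring. Qed.

Lemma Fn_period x : 0 < x -> Fn (x + 1 / N) = Fn x.
Proof.
  intros Hx. unfold Fn. fold N.
  replace (N * (x + 1 / N)) with (N * x + 1) by (field; lra).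
  rewrite Lam_succ by nra.
  set (G := fun j => Lam (x + INR j / N)).
  rewrite (sumR_ext n (fun j => Lam (x + 1 / N + INR j / N)) (fun j => G (S j)))
    by (intros j _; unfold G; rewrite S_INR; f_equal; field; lra).
  rewrite sumR_shift.
  replace (sumR n (fun j => Lam (x + INR j / N))) with (sumR n G) by reflexivity.
  unfold G. fold N. replace (x + N / N) with (x + 1) by (field; lra).
  replace (x + INR 0 / N) with x by (simpl; field; lra).
  rewrite Lam_succ by lra. unfold tlnt. rewrite ln_mult by lra. try field; try lra.
Qed.

Lemma Fn_const x : 0 < x -> Fn x = Fn 1.
Proof.
  intros Hx.
  assert (Aff : forall y, 0 < y -> Fn y = Fn 1 + kap * (y - 1)).
  { intros y Hy.
    assert (E : (fun z => Fn z - kap * z) y = (fun z => Fn z - kap * z) 1).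
    { apply (const_of_deriv0 (fun z => Fn z - kap * z) 1 y); try lra. intros z Hz.
      replace 0 with (kap - kap * 1) by ring.
      apply (is_derive_minus Fn (fun z => kap * z)). apply Fn_deriv; exact Hz. auto_derive; auto. }
    simpl in E. lra. }
  assert (Hk : kap = 0).
  { pose proof (Fn_period 1 ltac:(lra)) as P.
    rewrite (Aff (1 + 1 / N)) in P by (apply Rplus_lt_0_compat; [lra | apply Rdiv_lt_0_compat; lra]).
    assert (kap * (1 / N) = 0) by (replace (1 + 1 / N - 1) with (1 / N) in P by ring; lra).
    apply Rmult_integral in H. destruct H as [H|H]; auto.
    exfalso. assert (0 < 1 / N) by (apply Rdiv_lt_0_compat; lra). lra. }
  rewrite Aff by exact Hx. rewrite Hk. ring.
Qed.

End FConst.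


Definition W (a : R) : R := a * tlnt a / 2 - a * a / 4.

Lemma W0 : W 0 = 0.
Proof. unfold W, tlnt. field. Qed.

Lemma W_cont a : continuous W a.
Proof.
  unfold W.
  apply (continuous_minus (fun a => a * tlnt a / 2) (fun a => a * a / 4)).
  - apply (continuous_mult (fun a => a * tlnt a) (fun _ => / 2)).
    apply (continuous_mult (fun a => a) tlnt). apply continuous_id. apply tlnt_cont. apply continuous_const.
  - apply exd_cont. auto_derive; auto.
Qed.

Lemma RInt_tlnt a b : 0 <= a <= b -> RInt tlnt a b = W b - W a.
Proof.
  intros Hab. apply (FTC_open tlnt W a b 1). lra. lra.
  intros; apply tlnt_cont. apply W_cont. apply W_cont.
  intros x Hx. unfold W, tlnt. auto_derive. lra. field. lra.
Qed.

Lemma Lam_exRInt a b : 0 <= a -> 0 <= b -> ex_RInt Lam a b.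
Proof.
  intros Ha Hb. apply exRInt_cont. intros z Hz. apply Lam_cont.
  assert (0 <= Rmin a b) by (apply Rmin_glb; lra). lra.
Qed.

Lemma RInt_shift (f : R -> R) c a b : ex_RInt f (a + c) (b + c) ->
  RInt (fun t => f (t + c)) a b = RInt f (a + c) (b + c).
Proof.
  intros H. pose proof (RInt_comp_lin (V:=R_CompleteNormedModule) f 1 c a b) as E.
  replace (1 * a + c) with (a + c) in E by ring. replace (1 * b + c) with (b + c) in E by ring.
  rewrite <- E by exact H. apply RInt_ext. intros t _. unfold scal; simpl; unfold mult; simpl.
  rewrite Rmult_1_l. f_equal. ring.
Qed.

Definition I0 := RInt Lam 0 1.

Lemma RInt_Lam_plus_tlnt a b : 0 <= a <= b ->
  RInt (fun t => Lam (t + 1)) a b = RInt Lam a b + (W b - W a).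
Proof.
  intros Hab.
  rewrite (RInt_ext (fun t => Lam (t + 1)) (fun t => plus (Lam t) (tlnt t))).
  2:{ intros t Ht. rewrite Rmin_left in Ht by lra. rewrite Rmax_right in Ht by lra.
      unfold plus; simpl. apply Lam_succ. lra. }
  rewrite (RInt_plus (V:=R_CompleteNormedModule)). rewrite RInt_tlnt by lra. reflexivity.
  apply Lam_exRInt; lra. apply exRInt_cont; intros; apply tlnt_cont.
Qed.

Lemma J_val k : RInt Lam (INR k) (INR k + 1) = I0 + W (INR k).
Proof.
  induction k as [|k IH].
  - simpl. rewrite W0. unfold I0. rewrite Rplus_0_l, Rplus_0_r. reflexivity.
  - rewrite S_INR. pose proof (pos_INR k).
    rewrite <- (RInt_shift Lam 1 (INR k) (INR k + 1)) by (apply Lam_exRInt; lra).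
    rewrite RInt_Lam_plus_tlnt by lra. rewrite IH. lra.
Qed.

Lemma RInt_Lam_0m m : RInt Lam 0 (INR m) = sumR m (fun k => I0 + W (INR k)).
Proof.
  induction m as [|m IH].
  - simpl. rewrite RInt_point. reflexivity.
  - simpl sumR. rewrite <- IH. rewrite <- J_val. rewrite S_INR. pose proof (pos_INR m).
    rewrite <- (RInt_Chasles (V:=R_CompleteNormedModule) Lam 0 (INR m) (INR m + 1)).
    reflexivity. apply Lam_exRInt; lra. apply Lam_exRInt; lra.
Qed.

Lemma RInt_Lam_shift c : 0 <= c <= 1 -> RInt (fun x => Lam (x + c)) 0 1 = I0 + W c.
Proof.
  intros Hc.
  rewrite RInt_shift by (apply Lam_exRInt; lra). rewrite Rplus_0_l.
  rewrite <- (RInt_Chasles (V:=R_CompleteNormedModule) Lam c 1 (1 + c)) by (apply Lam_exRInt; lra).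
  replace (RInt Lam 1 (1 + c)) with (RInt (fun t => Lam (t + 1)) 0 c).
  2:{ rewrite RInt_shift by (apply Lam_exRInt; lra). f_equal; ring. }
  rewrite RInt_Lam_plus_tlnt by lra.
  unfold I0. rewrite <- (RInt_Chasles (V:=R_CompleteNormedModule) Lam 0 c 1) by (apply Lam_exRInt; lra).
  rewrite W0. unfold plus; simpl. lra.
Qed.


Lemma is_RInt_sumR n (f : nat -> R -> R) (v : nat -> R) a b :
  (forall j, (j < n)%nat -> is_RInt (f j) a b (v j)) ->
  is_RInt (fun x => sumR n (fun j => f j x)) a b (sumR n v).
Proof.
  induction n as [|n IH]; intros H; simpl.
  - pose proof (is_RInt_const (V:=R_NormedModule) a b 0) as H0.
    assert (E : scal (b - a) (0 : R_NormedModule) = 0) by (unfold scal; simpl; unfold mult; simpl; ring).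
    rewrite E in H0. exact H0.
  - apply (is_RInt_plus (V:=R_NormedModule) (fun x => sumR n (fun j => f j x)) (f n)).
    apply IH. intros; apply H; lia. apply H; lia.
Qed.

Lemma sum_sq n : sumR n (fun j => INR j * INR j) = (INR n - 1) * INR n * (2 * INR n - 1) / 6.
Proof. induction n as [|n IH]; simpl sumR. simpl. field. rewrite IH, S_INR. field. Qed.

Section Final.
Variable n : nat.
Hypothesis Hn : (1 <= n)%nat.
Let N := INR n.
Let HN : 0 < N.
Proof. unfold N. apply lt_0_INR. lia. Qed.

Lemma W_scale j : N * W (INR j / N) = W (INR j) / N - ln N * (INR j * INR j) / (2 * N).
Proof.
  destruct j as [|j].
  - simpl. unfold Rdiv. rewrite Rmult_0_l. rewrite W0. field. lra.
  - assert (Hj : 0 < INR (S j)) by (apply lt_0_INR; lia).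
    unfold W, tlnt. unfold Rdiv at 2 3 4 5. rewrite ln_mult, ln_Rinv by (try apply Rinv_0_lt_compat; lra).
    field. lra.
Qed.

Lemma Fn_int : is_RInt (Fn n) 0 1
  (/ N * sumR n (fun k => I0 + W (INR k)) - N * sumR n (fun j => I0 + W (INR j / N))
   - (N * N / 6 - N / 4) * ln N).
Proof.
  assert (HA : is_RInt (fun x => Lam (N * x)) 0 1 (/ N * sumR n (fun k => I0 + W (INR k)))).
  { rewrite <- RInt_Lam_0m. fold N.
    assert (E : RInt (fun x => Lam (N * x)) 0 1 = / N * RInt Lam 0 N).
    { pose proof (RInt_comp_lin (V:=R_CompleteNormedModule) Lam N 0 0 1) as C.
      replace (N * 0 + 0) with 0 in C by ring. replace (N * 1 + 0) with N in C by ring.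
      rewrite <- C by (apply Lam_exRInt; lra).
      rewrite (RInt_scal (V:=R_CompleteNormedModule)).
      unfold scal; simpl; unfold mult; simpl. rewrite <- Rmult_assoc, Rinv_l, Rmult_1_l by lra.
      apply RInt_ext. intros; f_equal; ring.
      apply exRInt_cont. intros z Hz. rewrite Rmin_left in Hz by lra. rewrite Rmax_right in Hz by lra.
      apply (continuous_comp (fun x => N * x + 0) Lam). apply exd_cont; auto_derive; auto.
      apply Lam_cont. nra. }
    rewrite <- E. apply (RInt_correct (V:=R_CompleteNormedModule)).
    apply exRInt_cont. intros z Hz. rewrite Rmin_left in Hz by lra. rewrite Rmax_right in Hz by lra.
    apply (continuous_comp (fun x => N * x) Lam). apply exd_cont; auto_derive; auto.
    apply Lam_cont. nra. }
  assert (HS : is_RInt (fun x => sumR n (fun j => Lam (x + INR j / N))) 0 1 (sumR n (fun j => I0 + W (INR j / N)))).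
  { apply (is_RInt_sumR n (fun j x => Lam (x + INR j / N))). intros j Hj.
    assert (Hc : 0 <= INR j / N <= 1).
    { split. apply Rmult_le_pos. apply pos_INR. left; apply Rinv_0_lt_compat; lra.
      apply Rmult_le_reg_r with N. lra. unfold Rdiv. rewrite Rmult_assoc, Rinv_l, Rmult_1_r by lra.
      rewrite Rmult_1_l. unfold N. apply le_INR. lia. }
    rewrite <- RInt_Lam_shift by exact Hc. apply (RInt_correct (V:=R_CompleteNormedModule)).
    apply exRInt_cont. intros z Hz. rewrite Rmin_left in Hz by lra. rewrite Rmax_right in Hz by lra.
    apply (continuous_comp (fun x => x + INR j / N) Lam). apply exd_cont; auto_derive; auto.
    apply Lam_cont. lra. }
  assert (HQ : is_RInt (fun x => N * x * (N * x - 1) / 2 * ln N) 0 1 ((N * N / 6 - N / 4) * ln N)).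
  { replace ((N * N / 6 - N / 4) * ln N)
      with (minus ((N * N * 1 * 1 * 1 / 6 - N * 1 * 1 / 4) * ln N) ((N * N * 0 * 0 * 0 / 6 - N * 0 * 0 / 4) * ln N))
      by (unfold minus, plus, opp; simpl; field).
    apply (is_RInt_derive (fun x => (N * N * x * x * x / 6 - N * x * x / 4) * ln N)).
    intros x _. auto_derive; auto; field. intros x _. apply exd_cont. auto_derive; auto. }
  pose proof (is_RInt_minus (V:=R_NormedModule) _ _ _ _ _ _
               (is_RInt_minus (V:=R_NormedModule) _ _ _ _ _ _ HA (is_RInt_scal (V:=R_NormedModule) _ _ _ N _ HS)) HQ) as H.
  unfold minus, plus, opp, scal in H; simpl in H; unfold mult in H; simpl in H.
  eapply is_RInt_ext; [|exact H].
  intros x _. unfold Fn. fold N. reflexivity.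
Qed.

Lemma Fn1_val : Fn n 1 = (1 - N * N) * I0 + ln N / 12.
Proof.
  assert (E1 : RInt (Fn n) 0 1 = Fn n 1).
  { rewrite (RInt_ext (Fn n) (fun _ => Fn n 1)).
    rewrite RInt_const. unfold scal; simpl; unfold mult; simpl. ring.
    intros x Hx. rewrite Rmin_left in Hx by lra. rewrite Rmax_right in Hx by lra.
    apply Fn_const. exact Hn. lra. }
  rewrite <- E1. rewrite (is_RInt_unique (V:=R_CompleteNormedModule) _ _ _ _ Fn_int).
  assert (S1 : sumR n (fun j => I0 + W (INR j / N)) = N * I0 + sumR n (fun j => W (INR j / N)))
    by (rewrite sumR_plus, sumR_const; reflexivity).
  assert (S2 : sumR n (fun k => I0 + W (INR k)) = N * I0 + sumR n (fun k => W (INR k)))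
    by (rewrite sumR_plus, sumR_const; reflexivity).
  assert (S3 : N * sumR n (fun j => W (INR j / N)) =
               / N * sumR n (fun k => W (INR k)) - ln N / (2 * N) * ((N - 1) * N * (2 * N - 1) / 6)).
  { rewrite <- sumR_scal.
    rewrite (sumR_ext n (fun j => N * W (INR j / N)) (fun j => / N * W (INR j) + (- (ln N / (2 * N))) * (INR j * INR j)))
      by (intros j _; rewrite W_scale; field; lra).
    rewrite sumR_plus, !sumR_scal, sum_sq. fold N. ring. }
  rewrite S1, S2. rewrite !Rmult_plus_distr_l, S3. field. lra.
Qed.

End Final.


Lemma prodR_ext n f h : (forall j, (j < n)%nat -> f j = h j) -> prodR n f = prodR n h.
Proof.
  induction n as [|n IH]; intros H; simpl. reflexivity.
  f_equal. apply IH. intros; apply H; lia. apply H; lia.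
Qed.

Lemma exp_pow_nat a m : exp a ^ m = exp (INR m * a).
Proof.
  induction m as [|m IH]. simpl. rewrite Rmult_0_l, exp_0. reflexivity.
  rewrite S_INR. simpl pow. rewrite IH, <- exp_plus. f_equal. ring.
Qed.

Theorem mainTheorem16 (n : nat) (x : R) :
  (1 <= n)%nat -> 0 < x ->
  K (INR n * x) =
    Rpower (INR n) (/2 * (INR n * x) * (INR n * x - 1) + /12)
    * Rpower omega_t (- (/2 * (INR n ^ 2 - 1)))
    * prodR n (fun j => K (x + INR j / INR n) ^ n).
Proof.
  intros Hn Hx.
  set (N := INR n).
  assert (HN : 0 < N) by (unfold N; apply lt_0_INR; lia).
  assert (HF : Fn n x = (1 - N * N) * I0 + ln N / 12).
  { rewrite Fn_const by auto. apply Fn1_val. exact Hn. }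
  assert (Hom : ln omega_t = 2 * I0).
  { unfold omega_t. rewrite ln_exp. f_equal. unfold I0. apply RInt_ext.
    intros t Ht. rewrite Rmin_left in Ht by lra. rewrite Rmax_right in Ht by lra. apply lnK_Lam. lra. }
  assert (Hprod : prodR n (fun j => K (x + INR j / N) ^ n) = exp (N * sumR n (fun j => Lam (x + INR j / N)))).
  { rewrite <- sumR_scal. rewrite <- prodR_exp. apply prodR_ext. intros j _.
    unfold K. rewrite exp_pow_nat. rewrite lnK_Lam. reflexivity.
    assert (0 <= INR j / N) by (apply Rmult_le_pos; [apply pos_INR | left; apply Rinv_0_lt_compat; lra]). lra. }
  fold N. rewrite Hprod.
  unfold Rpower. rewrite Hom.
  unfold K. rewrite lnK_Lam by nra.
  rewrite <- !exp_plus. f_equal.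
  unfold Fn in HF. fold N in HF.
  simpl pow. nra.
Qed.
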